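(* Let $f\in\mathcal{F}$ and $V>0$. Then the FCC lattice $D_3$, the BCC lattice $D_3^*$ and the simple cubic lattice $\mathbb Z^3$ (each of volume $V$) are critical points of $L\mapsto E_f[L]$ among Bravais lattices of fixed volume $V$, i.e. the gradient of $(u,v,x,y,z)\mapsto E_f(u,v,x,y,z)$ vanishes at the parameters of each of these lattices.
   Context: Fix $V>0$ and set $C:=V^{2/3}2^{1/3}$. Every Bravais lattice $L\subset\mathbb R^3$ of covolume $V$ is parametrized by $(u,v,x,y,z)$ with $u,v>0$, $x,y,z\in\mathbb R$, via the basis $v_1=\sqrt C(1/\sqrt u,0,0)$, $v_2=\sqrt C(x/\sqrt u,v/\sqrt u,0)$, $v_3=\sqrt C(y/\sqrt u,vz/\sqrt u,u/(v\sqrt2))$; its quadratic form is $Q_L(m,n,p)=\frac{C}{u}\big[(m+xn+yp)^2+v^2(n+zp)^2+\frac{u^3}{2v^2}p^2\big]$. Let $\mathcal F$ be the set of $f\in C^2((0,\infty))$ such that for each $k\in\{0,1,2\}$, $|f^{(k)}(r)|=O(r^{-3/2-k-\eta_k})$ as $r\to\infty$ for some $\eta_k>0$. For $f\in\mathcal F$, $E_f[L]=E_f(u,v,x,y,z):=\sum_{(m,n,p)\in\mathbb Z^3\setminus\{0\}} f(Q_L(m,n,p))=\sum_{q\in L\setminus\{0\}}f(|q|^2)$, viewed as a function of the five variables $(u,v,x,y,z)$ at fixed $V$. The FCC lattice $D_3$ of volume $V$ has parameters $(u,v,x,y,z)=(1,1,0,1/2,1/2)$; the simple cubic lattice $\mathbb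 Z^3$ of volume $V$ has parameters $(2^{1/3},1,0,0,0)$; $D_3^*$ denotes the BCC lattice (the dual lattice of the FCC lattice) rescaled to volume $V$. Criticality/local optimality of a lattice among Bravais lattices of volume $V$ means criticality/local optimality of $E_f$ as a function of $(u,v,x,y,z)$ at its parameters. *)

(* Defs.v *)
From Stdlib Require Import Reals ZArith.
From Coquelicot Require Import Coquelicot.
Open Scope R_scope.

(* The class F: f in C^2((0,oo)) with |f^(k)(r)| = O(r^(-3/2-k-eta_k)) as r -> oo,
   k = 0,1,2.  Only values of f on (0,oo) matter. *)
Definition decay (g : R -> R) (k : R) : Prop :=
  exists eta : R, 0 < eta /\
  exists K R0 : R, 0 < R0 /\
    forall r : R, R0 <= r -> Rabs (g r) <= K * Rpower r (- (3/2 + k + eta)).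

Definition in_class_F (f : R -> R) : Prop :=
  exists f1 f2 : R -> R,
    (forall r : R, 0 < r ->
       is_derive f r (f1 r) /\ is_derive f1 r (f2 r) /\ continuous f2 r) /\
    decay f 0 /\ decay f1 1 /\ decay f2 2.

Definition Cst (V : R) : R := Rpower V (2/3) * Rpower 2 (1/3).

Definition QL (V u v x y z : R) (m n p : Z) : R :=
  Cst V / u *
  ((IZR m + x * IZR n + y * IZR p) ^ 2 + v ^ 2 * (IZR n + z * IZR p) ^ 2
   + u ^ 3 / (2 * v ^ 2) * IZR p ^ 2).

Definition box_sum (f : R -> R) (V u v x y z : R) (N : nat) : R :=
  let M := Z.of_nat N in
  sum_n (fun i => sum_n (fun j => sum_n (fun k =>
    let m := (Z.of_nat i - M)%Z in
    let n := (Z.of_nat j - M)%Z in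
    let p := (Z.of_nat k - M)%Z in
    if (Z.eqb m 0 && Z.eqb n 0 && Z.eqb p 0)%bool then 0
    else f (QL V u v x y z m n p)) (2 * N)) (2 * N)) (2 * N).

(* E_f(u,v,x,y,z) = sum_{(m,n,p) in Z^3 \ {0}} f(Q_L(m,n,p)), as the limit of
   the box partial sums (the series is absolutely convergent for f in F). *)
Definition Ef (f : R -> R) (V u v x y z : R) : R :=
  real (Lim_seq (box_sum f V u v x y z)).

Definition critical5 (F : R -> R -> R -> R -> R -> R) (u v x y z : R) : Prop :=
  is_derive (fun t => F t v x y z) u 0 /\
  is_derive (fun t => F u t x y z) v 0 /\
  is_derive (fun t => F u v t y z) x 0 /\
  is_derive (fun t => F u v x t z) y 0 /\
  is_derive (fun t => F u v x y t) z 0.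

Definition is_critical_at (f : R -> R) (V u v x y z : R) : Prop :=
  critical5 (Ef f V) u v x y z.

(* Main.v *)
From Stdlib Require Import Reals List Permutation Lia Lra ZArith FinFun Bool.
From Coquelicot Require Import Coquelicot.
Require Import Defs.
Open Scope R_scope.

Definition lsum {A} (g : A -> R) (l : list A) : R := fold_right (fun a acc => g a + acc) 0 l.

Lemma lsum_app {A} (g : A -> R) l1 l2 : lsum g (l1 ++ l2) = lsum g l1 + lsum g l2.
Proof. induction l1; simpl; [ring| rewrite IHl1; ring]. Qed.

Lemma lsum_map {A B} (g : B -> R) (h : A -> B) l : lsum g (map h l) = lsum (fun x => g (h x)) l.
Proof. induction l; simpl; auto. rewrite IHl; auto. Qed.

Lemma lsum_flat_map {A B} (g : B -> R) (h : A -> list B) l :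
  lsum g (flat_map h l) = lsum (fun x => lsum g (h x)) l.
Proof. induction l; simpl; auto. rewrite lsum_app, IHl; auto. Qed.

Lemma lsum_ext {A} (g1 g2 : A -> R) l : (forall x, In x l -> g1 x = g2 x) -> lsum g1 l = lsum g2 l.
Proof. induction l; simpl; intros H; auto. rewrite H, IHl; auto. Qed.

Lemma lsum_plus {A} (g1 g2 : A -> R) l : lsum (fun x => g1 x + g2 x) l = lsum g1 l + lsum g2 l.
Proof. induction l; simpl; [ring| rewrite IHl; ring]. Qed.

Lemma lsum_scal {A} (c : R) (g : A -> R) l : lsum (fun x => c * g x) l = c * lsum g l.
Proof. induction l; simpl; [ring| rewrite IHl; ring]. Qed.

Lemma lsum_minus {A} (g1 g2 : A -> R) l : lsum (fun x => g1 x - g2 x) l = lsum g1 l - lsum g2 l.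
Proof. induction l; simpl; [ring| rewrite IHl; ring]. Qed.

Lemma lsum_le {A} (g1 g2 : A -> R) l : (forall x, In x l -> g1 x <= g2 x) -> lsum g1 l <= lsum g2 l.
Proof. induction l; simpl; intros H; [lra|]. pose proof (H a (or_introl eq_refl)).
 pose proof (IHl (fun x Hx => H x (or_intror Hx))). lra. Qed.

Lemma lsum_nonneg {A} (g : A -> R) l : (forall x, In x l -> 0 <= g x) -> 0 <= lsum g l.
Proof. intros H. replace 0 with (lsum (fun _ => 0) l). apply lsum_le; auto.
 clear H; induction l; simpl; auto; rewrite IHl; ring. Qed.

Lemma lsum_abs {A} (g : A -> R) l : Rabs (lsum g l) <= lsum (fun x => Rabs (g x)) l.
Proof. induction l; simpl. rewrite Rabs_R0; lra.
 eapply Rle_trans. apply Rabs_triang. lra. Qed.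

Lemma lsum_const_le {A} (g : A -> R) l B : (forall x, In x l -> g x <= B) -> lsum g l <= INR (length l) * B.
Proof. induction l; simpl length; simpl lsum; intros H. simpl; lra. rewrite S_INR.
 pose proof (H a (or_introl eq_refl)). pose proof (IHl (fun x Hx => H x (or_intror Hx))). lra. Qed.

Lemma lsum_perm {A} (g : A -> R) l l' : Permutation l l' -> lsum g l = lsum g l'.
Proof. induction 1; simpl; try ring; try rewrite IHPermutation; try ring.
 rewrite IHPermutation1; auto. Qed.

Lemma lsum_same {A} (g : A -> R) l l' : NoDup l -> NoDup l' -> (forall x, In x l <-> In x l') ->
  lsum g l = lsum g l'.
Proof. intros; apply lsum_perm, NoDup_Permutation; auto. Qed.

Lemma lsum_filter {A} (g : A -> R) (P : A -> bool) l :
  lsum g l = lsum g (filter P l) + lsum g (filter (fun x => negb (P x)) l).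
Proof. induction l; simpl. ring. destruct (P a); simpl; rewrite IHl; ring. Qed.

Lemma lsum_incl {A} (g : A -> R) l L : (forall x, 0 <= g x) -> NoDup l -> incl l L -> lsum g l <= lsum g L.
Proof.
 intros Hg Hl; revert L; induction Hl as [|a l Hna Hl IH]; intros L Hinc; simpl.
 - apply lsum_nonneg; auto.
 - assert (Ha : In a L) by (apply Hinc; left; auto).
   destruct (in_split _ _ Ha) as [L1 [L2 ->]].
   rewrite (lsum_perm g (L1 ++ a :: L2) (a :: L1 ++ L2)).
   2: { apply Permutation_sym, Permutation_middle. }
   simpl. assert (lsum g l <= lsum g (L1 ++ L2)); [|lra].
   apply IH. intros x Hx. assert (In x (L1 ++ a :: L2)) by (apply Hinc; right; auto).
   apply in_app_or in H. apply in_or_app. destruct H as [H|[H|H]]; auto. subst; contradiction.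
Qed.

Lemma NoDup_list_prod {A B} (l : list A) (l' : list B) : NoDup l -> NoDup l' -> NoDup (list_prod l l').
Proof.
 intros Hl Hl'; induction Hl as [|a l Hna Hl IH]; simpl. constructor.
 apply NoDup_app; auto.
 - apply Injective_map_NoDup; auto. intros x y E; inversion E; auto.
 - intros [x y] H1 H2. apply in_map_iff in H1. destruct H1 as [z [Ez _]]. inversion Ez; subst.
   apply in_prod_iff in H2. tauto.
Qed.

Notation Z3 := (Z * Z * Z)%type.
Definition zrange (N : nat) : list Z := map (fun i => (Z.of_nat i - Z.of_nat N)%Z) (seq 0 (S (2*N))).
Definition boxlist (N : nat) : list Z3 := list_prod (list_prod (zrange N) (zrange N)) (zrange N).
Definition ninf (q : Z3) : Z := let '(m, n, p) := q in Z.max (Z.abs m) (Z.max (Z.abs n) (Z.abs p)).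
Definition SumBox (N : nat) (g : Z3 -> R) : R := lsum g (boxlist N).

Lemma In_zrange a N : In a (zrange N) <-> (Z.abs a <= Z.of_nat N)%Z.
Proof. unfold zrange; rewrite in_map_iff; split.
 - intros [i [<- Hi]]. apply in_seq in Hi. lia.
 - intros H. exists (Z.to_nat (a + Z.of_nat N)). split. lia. apply in_seq. lia. Qed.

Lemma NoDup_zrange N : NoDup (zrange N).
Proof. apply Injective_map_NoDup. intros x y E; lia. apply seq_NoDup. Qed.

Lemma NoDup_box N : NoDup (boxlist N).
Proof. unfold boxlist; repeat apply NoDup_list_prod; apply NoDup_zrange. Qed.

Lemma In_box q N : In q (boxlist N) <-> (ninf q <= Z.of_nat N)%Z.
Proof. destruct q as [[m n] p]; unfold boxlist, ninf.
 split; intros H.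
 - apply in_prod_iff in H; destruct H as [H H3]; apply in_prod_iff in H; destruct H as [H1 H2].
   apply In_zrange in H1, H2, H3. lia.
 - apply in_prod_iff; split; [apply in_prod_iff; split|]; apply In_zrange; lia. Qed.

Lemma length_zrange N : length (zrange N) = S (2*N).
Proof. unfold zrange. rewrite length_map, length_seq. auto. Qed.

Lemma length_box N : length (boxlist N) = (S (2*N) * S (2*N) * S (2*N))%nat.
Proof. unfold boxlist. rewrite !length_prod, !length_zrange. auto. Qed.

Definition inb (j : nat) (q : Z3) : bool := Z.leb (ninf q) (Z.of_nat j).

Lemma filter_box j k g : (j <= k)%nat -> lsum g (filter (inb j) (boxlist k)) = SumBox j g.
Proof. intros H. apply lsum_same. apply NoDup_filter, NoDup_box. apply NoDup_box.
 intros x. rewrite filter_In, !In_box. unfold inb. rewrite Z.leb_le. lia. Qed.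

Lemma SumBox_split j k g : (j <= k)%nat ->
  SumBox k g = SumBox j g + lsum g (filter (fun x => negb (inb j x)) (boxlist k)).
Proof. intros H. unfold SumBox at 1. rewrite (lsum_filter g (inb j)). rewrite filter_box; auto. Qed.

Lemma Rpow_pos x a : 0 < Rpower x a.
Proof. unfold Rpower; apply exp_pos. Qed.

Lemma Rpow_1 a : Rpower 1 a = 1.
Proof. unfold Rpower; rewrite ln_1, Rmult_0_r, exp_0; auto. Qed.

Lemma Rpow_anti x y a : 0 < x <= y -> 0 <= a -> Rpower y (-a) <= Rpower x (-a).
Proof. intros H Ha. rewrite !Rpower_Ropp. apply Rinv_le_contravar. apply Rpow_pos.
 apply Rle_Rpower_l; auto. Qed.

Lemma Rpow_santi x y a : 0 < x < y -> 0 < a -> Rpower y (-a) < Rpower x (-a).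
Proof. intros H Ha. rewrite !Rpower_Ropp. apply Rinv_lt_contravar. 
 apply Rmult_lt_0_compat; apply Rpow_pos. apply Rlt_Rpower_l; auto. Qed.

Lemma Rpow_add x a b : Rpower x a * Rpower x b = Rpower x (a + b).
Proof. rewrite Rpower_plus; auto. Qed.

Lemma Rpow_sq x a : 0 < x -> Rpower (x ^ 2) a = Rpower x (2 * a).
Proof. intros H. rewrite <- (Rpower_pow 2 x H), Rpower_mult. simpl (INR 2). f_equal. Qed.

Lemma Rpow_mul x y a : 0 < x -> 0 < y -> Rpower (x * y) a = Rpower x a * Rpower y a.
Proof. intros; rewrite Rpower_mult_distr; auto. Qed.

Lemma Rpow_sqr x : 0 < x -> x ^ 2 = Rpower x 2.
Proof. intros H. rewrite <- (Rpower_pow 2 x H). simpl (INR 2). f_equal. Qed.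

Lemma Rpow_x x : 0 < x -> x = Rpower x 1.
Proof. intros; rewrite Rpower_1; auto. Qed.

Lemma Rpow_small a eps : 0 < a -> 0 < eps -> exists N : nat, (1 <= N)%nat /\
  forall j : nat, (N <= j)%nat -> Rpower (INR j) (-a) < eps.
Proof.
 intros Ha He. destruct (archimed (Rpower eps (-1/a))) as [H1 _].
 set (N := Z.to_nat (up (Rpower eps (-1/a)))).
 exists (S N). split. lia. intros j Hj.
 assert (HN : Rpower eps (-1/a) < INR j).
 { apply Rlt_le_trans with (IZR (up (Rpower eps (-1 / a)))); auto.
   assert (0 <= up (Rpower eps (-1/a)))%Z.
   { apply le_IZR. pose proof (Rpow_pos eps (-1/a)). lra. }
   rewrite <- (Z2Nat.id (up _)) by auto. rewrite <- INR_IZR_INZ. apply le_INR. lia. }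
 apply Rlt_le_trans with (Rpower (Rpower eps (-1/a)) (-a)).
 apply Rpow_santi; auto. split; auto. apply Rpow_pos.
 rewrite Rpower_mult. replace (-1 / a * - a) with 1 by (field; lra). rewrite Rpower_1; lra.
Qed.

Definition rho (q : Z3) : R := let '(m, n, p) := q in IZR m ^ 2 + IZR n ^ 2 + IZR p ^ 2.
Definition isz (q : Z3) : bool := let '(m, n, p) := q in (Z.eqb m 0 && Z.eqb n 0 && Z.eqb p 0)%bool.
Definition hs (e : R) (q : Z3) : R := if isz q then 0 else Rpower (rho q) (-(3/2 + e)).

Lemma isz_ninf q : isz q = true <-> ninf q = 0%Z.
Proof. destruct q as [[m n] p]; simpl. rewrite !andb_true_iff, !Z.eqb_eq. lia. Qed.

Lemma isz_ninf' q : isz q = false <-> (1 <= ninf q)%Z.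
Proof. destruct q as [[m n] p]; simpl. rewrite !andb_false_iff, !Z.eqb_neq. lia. Qed.

Lemma sq_IZR_le a b : (Z.abs a <= Z.abs b)%Z -> IZR a ^ 2 <= IZR b ^ 2.
Proof. intros H. replace (IZR a ^ 2) with (IZR (a * a)) by (rewrite mult_IZR; ring).
 replace (IZR b ^ 2) with (IZR (b * b)) by (rewrite mult_IZR; ring). apply IZR_le. nia. Qed.

Lemma rho_lb q : IZR (ninf q) ^ 2 <= rho q.
Proof. destruct q as [[m n] p]; simpl rho. unfold ninf.
 assert (0 <= IZR m ^ 2) by (apply pow2_ge_0). assert (0 <= IZR n ^ 2) by (apply pow2_ge_0).
 assert (0 <= IZR p ^ 2) by (apply pow2_ge_0).
 destruct (Z.max_spec (Z.abs m) (Z.max (Z.abs n) (Z.abs p))) as [[_ E]|[_ E]]; rewrite E.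
 destruct (Z.max_spec (Z.abs n) (Z.abs p)) as [[_ E']|[_ E']]; rewrite E'.
 pose proof (sq_IZR_le (Z.abs p) p ltac:(lia)). lra.
 pose proof (sq_IZR_le (Z.abs n) n ltac:(lia)). lra.
 pose proof (sq_IZR_le (Z.abs m) m ltac:(lia)). lra.
Qed.

Lemma rho_ub q : rho q <= 3 * IZR (ninf q) ^ 2.
Proof. destruct q as [[m n] p]; simpl rho. 
 pose proof (sq_IZR_le m (ninf (m,n,p)) ltac:(simpl; lia)).
 pose proof (sq_IZR_le n (ninf (m,n,p)) ltac:(simpl; lia)).
 pose proof (sq_IZR_le p (ninf (m,n,p)) ltac:(simpl; lia)). lra. Qed.

Lemma rho_ge1 q : isz q = false -> 1 <= rho q.
Proof. intros H. apply isz_ninf' in H. pose proof (rho_lb q). apply IZR_le in H.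
 assert (1 <= IZR (ninf q) ^ 2) by nra. lra. Qed.

Lemma rho_nonneg q : 0 <= rho q.
Proof. destruct q as [[m n] p]; simpl. pose proof (pow2_ge_0 (IZR m)).
 pose proof (pow2_ge_0 (IZR n)). pose proof (pow2_ge_0 (IZR p)). lra. Qed.

Lemma hs_nonneg e q : 0 <= hs e q.
Proof. unfold hs; destruct (isz q). lra. left; apply Rpow_pos. Qed.

Lemma hs_shell e q (k : R) : 0 <= e -> isz q = false -> 0 < k -> k <= IZR (ninf q) ->
  hs e q <= Rpower k (-(3 + 2 * e)).
Proof. intros He H Hk Hkn. unfold hs; rewrite H.
 replace (-(3 + 2*e)) with (2 * (-(3/2+e))) by field. rewrite <- Rpow_sq by auto.
 apply Rpow_anti. split. nra. pose proof (rho_lb q). nra. lra. Qed.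

Lemma length_filter_shell j : 
  length (filter (fun x => negb (inb j x)) (boxlist (S j))) =
  (length (boxlist (S j)) - length (boxlist j))%nat.
Proof.
 pose proof (filter_length (inb j) (boxlist (S j))).
 assert (length (filter (inb j) (boxlist (S j))) = length (boxlist j)).
 { apply Permutation_length, NoDup_Permutation. apply NoDup_filter, NoDup_box. apply NoDup_box.
   intros x. rewrite filter_In, !In_box. unfold inb. rewrite Z.leb_le. lia. }
 lia.
Qed.

Lemma shell_bound e j : 0 <= e ->
  SumBox (S j) (hs e) - SumBox j (hs e) <= 26 * Rpower (INR (S j)) (-(1 + 2 * e)).
Proof.
 intros He. rewrite (SumBox_split j (S j)) by lia.
 set (l := filter _ _). replace (SumBox j (hs e) + lsum (hs e) l - SumBox j (hs e)) with (lsum (hs e) l) by ring.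
 assert (Hk : 0 < INR (S j)) by (apply lt_0_INR; lia).
 eapply Rle_trans. apply (lsum_const_le _ l (Rpower (INR (S j)) (-(3 + 2 * e)))).
 { intros x Hx. unfold l in Hx. apply filter_In in Hx. destruct Hx as [H1 H2].
   apply In_box in H1. unfold inb in H2. apply negb_true_iff, Z.leb_gt in H2.
   apply hs_shell; auto. apply isz_ninf'. lia. rewrite INR_IZR_INZ. apply IZR_le. lia. }
 unfold l; rewrite length_filter_shell, !length_box.
 assert (E : INR (S (2 * S j) * S (2 * S j) * S (2 * S j) - S (2 * j) * S (2 * j) * S (2 * j))
   = 24 * INR (S j) ^ 2 + 2).
 { rewrite minus_INR by nia. rewrite !mult_INR, !S_INR, !mult_INR, !S_INR. simpl. ring. }
 rewrite E.
 replace (Rpower (INR (S j)) (-(1 + 2 * e))) with (Rpower (INR (S j)) 2 * Rpower (INR (S j)) (-(3 + 2 * e)))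
   by (rewrite Rpow_add; replace (2 + - (3 + 2 * e)) with (-(1 + 2 * e)) by ring; reflexivity).
 rewrite <- Rpow_sqr by auto. pose proof (Rpow_pos (INR (S j)) (-(3 + 2 * e))).
 assert (1 <= INR (S j)) by (apply (le_INR 1); lia).
 assert (1 <= INR (S j) ^2) by nra.
 nra.
Qed.

Lemma telescope x E : 1 <= x -> 0 < E ->
  Rpower (x + 1) (-(1 + E)) <= (Rpower x (-E) - Rpower (x + 1) (-E)) / E.
Proof.
 intros Hx HE.
 destruct (MVT_gen (fun t => Rpower t (-E)) x (x+1) (fun t => -E * Rpower t (-E - 1))) as [c [Hc Ec]].
 - intros t Ht. rewrite Rmin_left, Rmax_right in Ht by lra. apply is_derive_Reals.
   apply derivable_pt_lim_power. lra.
 - intros t Ht. rewrite Rmin_left, Rmax_right in Ht by lra. apply derivable_continuous_pt.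
   exists (-E * Rpower t (-E-1)). apply derivable_pt_lim_power. lra.
 - rewrite Rmin_left, Rmax_right in Hc by lra.
   replace (x + 1 - x) with 1 in Ec by ring.
   apply Rmult_le_reg_l with E; auto. field_simplify; [|lra].
   replace (-E - 1) with (-(1+E)) in Ec by ring.
   pose proof (Rpow_anti c (x+1) (1+E) ltac:(lra) ltac:(lra)). nra.
Qed.

Lemma tail_hs e j k : 0 < e -> (1 <= j)%nat -> (j <= k)%nat ->
  SumBox k (hs e) - SumBox j (hs e) <= 26 / (2 * e) * (Rpower (INR j) (-(2 * e)) - Rpower (INR k) (-(2*e))).
Proof.
 intros He Hj Hjk. induction Hjk.
 - assert (0 < 26 / (2 * e)) by (apply Rdiv_lt_0_compat; lra). lra.
 - pose proof (shell_bound e m ltac:(lra)) as Hs.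
   assert (Hm : 1 <= INR m) by (apply (le_INR 1); lia).
   pose proof (telescope (INR m) (2 * e) Hm ltac:(lra)) as Ht. rewrite <- S_INR in Ht.
   assert (26 * Rpower (INR (S m)) (-(1 + 2 * e)) <= 26 / (2*e) * (Rpower (INR m) (-(2 * e)) - Rpower (INR (S m)) (-(2 * e)))).
   { unfold Rdiv. rewrite Rmult_assoc. apply Rmult_le_compat_l. lra. 
     unfold Rdiv in Ht. rewrite (Rmult_comm (/ (2 * e))). auto. }
   lra.
Qed.

Lemma tail_hs' e j k : 0 < e -> (1 <= j)%nat -> (j <= k)%nat ->
  SumBox k (hs e) - SumBox j (hs e) <= 26 / (2 * e) * Rpower (INR j) (-(2 * e)).
Proof. intros. pose proof (tail_hs e j k H H0 H1). pose proof (Rpow_pos (INR k) (-(2*e))).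
 assert (0 < 26 / (2 * e)) by (apply Rdiv_lt_0_compat; lra). nra. Qed.

Lemma SumBox_hs_nonneg e k : 0 <= SumBox k (hs e).
Proof. apply lsum_nonneg; intros; apply hs_nonneg. Qed.

Lemma total_hs e k : 0 < e -> SumBox k (hs e) <= SumBox 1 (hs e) + 26 / (2 * e).
Proof. intros He. destruct k.
 - rewrite (SumBox_split 0 1) by lia. 
   assert (0 <= lsum (hs e) (filter (fun x => negb (inb 0 x)) (boxlist 1))) by (apply lsum_nonneg; intros; apply hs_nonneg).
   assert (0 < 26 / (2 * e)) by (apply Rdiv_lt_0_compat; lra). lra.
 - pose proof (tail_hs' e 1 (S k) He ltac:(lia) ltac:(lia)). replace (INR 1) with 1 in H by reflexivity. rewrite Rpow_1 in H. lra.
Qed.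

Definition Summ (g : Z3 -> R) : Prop :=
  exists K e, 0 <= K /\ 0 < e /\ forall q, Rabs (g q) <= K * hs e q.

Definition LB (g : Z3 -> R) : R := real (Lim_seq (fun N => SumBox N g)).

Lemma outer_bound g K e l j k : 0 <= K -> (forall q, Rabs (g q) <= K * hs e q) ->
  NoDup l -> (forall x, In x l -> In x (boxlist k) /\ inb j x = false) -> (j <= k)%nat ->
  Rabs (lsum g l) <= K * (SumBox k (hs e) - SumBox j (hs e)).
Proof.
 intros HK Hg Hl Hin Hjk. eapply Rle_trans. apply lsum_abs.
 eapply Rle_trans. apply lsum_le. intros x _. apply Hg. rewrite lsum_scal.
 apply Rmult_le_compat_l; auto. rewrite (SumBox_split j k) by auto.
 replace (SumBox j (hs e) + lsum (hs e) (filter (fun x : Z3 => negb (inb j x)) (boxlist k)) -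
   SumBox j (hs e)) with (lsum (hs e) (filter (fun x : Z3 => negb (inb j x)) (boxlist k))) by ring.
 apply lsum_incl; auto. apply hs_nonneg. intros x Hx. apply filter_In.
 destruct (Hin x Hx) as [H1 H2]. rewrite H2. auto.
Qed.

Lemma cauchy_bound g K e j k : 0 <= K -> 0 < e -> (forall q, Rabs (g q) <= K * hs e q) ->
  (1 <= j)%nat -> (j <= k)%nat ->
  Rabs (SumBox k g - SumBox j g) <= K * (26 / (2 * e) * Rpower (INR j) (-(2 * e))).
Proof.
 intros HK He Hg Hj Hjk. rewrite (SumBox_split j k g Hjk).
 replace (SumBox j g + lsum g (filter (fun x : Z3 => negb (inb j x)) (boxlist k)) - SumBox j g)
   with (lsum g (filter (fun x : Z3 => negb (inb j x)) (boxlist k))) by ring.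
 eapply Rle_trans. apply (outer_bound g K e _ j k); auto.
 apply NoDup_filter, NoDup_box. intros x Hx. apply filter_In in Hx. destruct Hx as [H1 H2].
 split; auto. destruct (inb j x); auto.
 apply Rmult_le_compat_l; auto. apply tail_hs'; auto.
Qed.

Lemma Summ_cv g : Summ g -> ex_finite_lim_seq (fun N => SumBox N g).
Proof.
 intros [K [e [HK [He Hg]]]]. apply ex_lim_seq_cauchy_corr. intros eps.
 set (c := K * (26 / (2 * e))).
 assert (Hc : 0 <= c). { unfold c. apply Rmult_le_pos; auto. left; apply Rdiv_lt_0_compat; lra. }
 destruct (Rpow_small (2 * e) (eps / (2 * c + 1)) ltac:(lra)) as [N [HN1 HN]].
 { apply Rdiv_lt_0_compat. destruct eps; simpl; lra. lra. }
 exists N. intros n m Hn Hm.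
 pose proof (cauchy_bound g K e N n HK He Hg HN1 Hn).
 pose proof (cauchy_bound g K e N m HK He Hg HN1 Hm).
 pose proof (HN N (le_n N)).
 assert (K * (26 / (2 * e) * Rpower (INR N) (- (2 * e))) = c * Rpower (INR N) (- (2 * e))) by (unfold c; ring).
 assert (c * Rpower (INR N) (- (2 * e)) <= c * (eps / (2 * c + 1))).
 { apply Rmult_le_compat_l; auto. lra. }
 assert (c * (eps / (2 * c + 1)) * 2 < eps).
 { destruct eps as [ep Hep]; simpl in *. apply Rmult_lt_reg_r with (2 * c + 1). lra.
   field_simplify; try lra; try nra. }
 replace (SumBox n g - SumBox m g) with ((SumBox n g - SumBox N g) - (SumBox m g - SumBox N g)) by ring.
 eapply Rle_lt_trans. apply Rabs_triang. rewrite Rabs_Ropp. lra.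
Qed.

Lemma LB_correct g : Summ g -> is_lim_seq (fun N => SumBox N g) (LB g).
Proof. intros H. destruct (Summ_cv g H) as [l Hl]. unfold LB. rewrite (is_lim_seq_unique _ _ Hl).
 simpl; auto. Qed.

Lemma LB_ext g1 g2 : (forall q, g1 q = g2 q) -> LB g1 = LB g2.
Proof. intros H. unfold LB. f_equal. apply Lim_seq_ext. intros N. apply lsum_ext. auto. Qed.

Lemma LB_plus g1 g2 : Summ g1 -> Summ g2 -> LB (fun q => g1 q + g2 q) = LB g1 + LB g2.
Proof. intros H1 H2. unfold LB at 1. 
 rewrite (is_lim_seq_unique _ (LB g1 + LB g2)). auto.
 eapply is_lim_seq_ext. 2: apply is_lim_seq_plus'; apply LB_correct; eauto.
 intros N. unfold SumBox. rewrite lsum_plus. auto. Qed.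

Lemma LB_scal c g : Summ g -> LB (fun q => c * g q) = c * LB g.
Proof. intros H1. unfold LB at 1. 
 rewrite (is_lim_seq_unique _ (c * LB g)). auto.
 eapply is_lim_seq_ext. 2: apply (is_lim_seq_scal_l (fun N => SumBox N g) c (LB g)); apply LB_correct; eauto.
 intros N. unfold SumBox. rewrite lsum_scal. auto. Qed.

Lemma LB_zero : LB (fun _ => 0) = 0.
Proof. unfold LB. rewrite (is_lim_seq_unique _ 0). auto.
 eapply is_lim_seq_ext. 2: apply is_lim_seq_const. intros N. unfold SumBox.
 induction (boxlist N); simpl; auto. rewrite <- IHl; ring. Qed.

Lemma Summ_scal c g : Summ g -> Summ (fun q => c * g q).
Proof. intros [K [e [HK [He Hg]]]]. exists (Rabs c * K), e. split. 
 apply Rmult_le_pos; auto; apply Rabs_pos. split; auto. intros q. rewrite Rabs_mult, Rmult_assoc.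
 apply Rmult_le_compat_l; auto. apply Rabs_pos. Qed.

Section Rearr.
Variable sigma : Z3 -> Z3.
Hypothesis Hinv : forall q, sigma (sigma q) = q.
Hypothesis Hbd : forall q, (ninf (sigma q) <= 3 * ninf q)%Z.

Lemma sigma_isz q : isz (sigma q) = isz q.
Proof. pose proof (Hbd q). pose proof (Hbd (sigma q)). rewrite Hinv in H0.
 destruct (isz q) eqn:E1; destruct (isz (sigma q)) eqn:E2; auto.
 apply isz_ninf in E1; apply isz_ninf' in E2; lia.
 apply isz_ninf' in E1; apply isz_ninf in E2; lia. Qed.

Lemma hs_sigma e q : 0 < e -> hs e (sigma q) <= Rpower 27 (3/2 + e) * hs e q.
Proof. intros He. unfold hs. rewrite sigma_isz. destruct (isz q) eqn:E. lra.
 pose proof (Hbd (sigma q)). rewrite Hinv in H.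
 pose proof (rho_lb (sigma q)). pose proof (rho_ub q).
 apply IZR_le in H. rewrite mult_IZR in H.
 assert (0 <= IZR (ninf (sigma q))). { apply IZR_le. unfold ninf; destruct (sigma q) as [[a b] c]; lia. }
 assert (1 <= rho q) by (apply rho_ge1; auto).
 assert (rho q / 27 <= rho (sigma q)).
 { assert (IZR (ninf q) ^ 2 <= 9 * IZR (ninf (sigma q)) ^ 2).
   { assert (0 <= IZR (ninf q)). { apply IZR_le. unfold ninf; destruct q as [[a b] c]; lia. } nra. }
   lra. }
 eapply Rle_trans. apply (Rpow_anti (rho q / 27)). split; auto. lra. lra.
 replace (rho q / 27) with (rho q * / 27) by reflexivity. rewrite Rpow_mul by lra.
 replace (Rpower (/ 27) (- (3 / 2 + e))) with (Rpower 27 (3/2 + e)).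
 right; ring.
 unfold Rpower. rewrite ln_Rinv by lra. f_equal. ring.
Qed.

Lemma Summ_sigma g : Summ g -> Summ (fun q => g (sigma q)).
Proof. intros [K [e [HK [He Hg]]]]. exists (K * Rpower 27 (3/2 + e)), e. split.
 apply Rmult_le_pos; auto. left; apply Rpow_pos. split; auto. intros q.
 eapply Rle_trans. apply Hg. rewrite Rmult_assoc. apply Rmult_le_compat_l; auto. apply hs_sigma; auto. Qed.

Lemma LB_sigma g : Summ g -> LB (fun q => g (sigma q)) = LB g.
Proof.
 intros HS. pose proof HS as [K [e [HK [He Hg]]]].
 unfold LB at 1. rewrite (is_lim_seq_unique _ (LB g + 0)). simpl; f_equal; ring.
 apply is_lim_seq_ext with (fun N => SumBox N g + (SumBox N (fun q => g (sigma q)) - SumBox N g)).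
 intros; ring.
 apply is_lim_seq_plus'. apply LB_correct; auto.
 apply is_lim_seq_Reals. intros eps Heps.
 set (c := K * (26 / (2 * e))).
 assert (Hc : 0 <= c). { unfold c. apply Rmult_le_pos; auto. left; apply Rdiv_lt_0_compat; lra. }
 destruct (Rpow_small (2 * e) (eps / (2 * c + 1)) ltac:(lra)) as [N0 [HN1 HN]].
 { apply Rdiv_lt_0_compat; lra. }
 exists (3 * N0)%nat. intros N HN3. unfold R_dist. rewrite Rminus_0_r.
 set (j := (N / 3)%nat).
 assert (Hj : (N0 <= j)%nat). { unfold j. apply Nat.div_le_lower_bound; lia. }
 assert (Hj1 : (1 <= j)%nat) by lia. assert (HjN : (j <= N)%nat). { unfold j. apply Nat.Div0.div_le_upper_bound. lia. }
 assert (Hj3 : (3 * j <= N)%nat). { unfold j. apply Nat.mul_div_le. lia. }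
 set (l := map sigma (boxlist N)).
 assert (Hl : NoDup l). { apply Injective_map_NoDup. intros x y E. rewrite <- (Hinv x), <- (Hinv y), E; auto. apply NoDup_box. }
 assert (E1 : SumBox N (fun q => g (sigma q)) = SumBox j g + lsum g (filter (fun x => negb (inb j x)) l)).
 { unfold SumBox at 1. rewrite <- lsum_map. fold l. rewrite (lsum_filter g (inb j) l). f_equal.
   apply lsum_same. apply NoDup_filter; auto. apply NoDup_box.
   intros x. rewrite filter_In, In_box. unfold inb. rewrite Z.leb_le. unfold l. rewrite in_map_iff. split.
   - tauto.
   - intros H. split; auto. exists (sigma x). rewrite Hinv. split; auto. apply In_box.
     pose proof (Hbd x). lia. }
 assert (B1 : Rabs (lsum g (filter (fun x => negb (inb j x)) l)) <= K * (26 / (2 * e) * Rpower (INR j) (-(2 * e)))).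
 { eapply Rle_trans. apply (outer_bound g K e _ j (3 * N)); auto. apply NoDup_filter; auto.
   intros x Hx. apply filter_In in Hx. destruct Hx as [H1 H2]. split. 
   unfold l in H1. apply in_map_iff in H1. destruct H1 as [y [<- Hy]]. apply In_box in Hy. apply In_box.
   pose proof (Hbd y). lia. destruct (inb j x); auto. lia.
   apply Rmult_le_compat_l; auto. apply tail_hs'; auto. lia. }
 rewrite E1, (SumBox_split j N g HjN).
 replace (SumBox j g + lsum g (filter (fun x : Z3 => negb (inb j x)) l) -
   (SumBox j g + lsum g (filter (fun x : Z3 => negb (inb j x)) (boxlist N)))) with
   (lsum g (filter (fun x : Z3 => negb (inb j x)) l) - lsum g (filter (fun x : Z3 => negb (inb j x)) (boxlist N))) by ring.
 pose proof (cauchy_bound g K e j N HK He Hg Hj1 HjN) as B2.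
 rewrite (SumBox_split j N g HjN) in B2.
 replace (SumBox j g + lsum g (filter (fun x : Z3 => negb (inb j x)) (boxlist N)) - SumBox j g)
   with (lsum g (filter (fun x : Z3 => negb (inb j x)) (boxlist N))) in B2 by ring.
 pose proof (HN j Hj).
 assert (K * (26 / (2 * e) * Rpower (INR j) (- (2 * e))) = c * Rpower (INR j) (- (2 * e))) by (unfold c; ring).
 assert (c * Rpower (INR j) (- (2 * e)) <= c * (eps / (2 * c + 1))).
 { apply Rmult_le_compat_l; auto. lra. }
 assert (c * (eps / (2 * c + 1)) * 2 < eps).
 { apply Rmult_lt_reg_r with (2 * c + 1). lra. field_simplify; try lra; try nra. }
 eapply Rle_lt_trans. apply Rabs_triang. rewrite Rabs_Ropp. lra.
Qed.
End Rearr.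

Lemma is_derive_eq (f : R -> R) x l l' : is_derive f x l -> l = l' -> is_derive f x l'.
Proof. intros H <-; auto. Qed.

Lemma is_derive_cont (f : R -> R) x l : is_derive f x l -> continuity_pt f x.
Proof. intros H. apply derivable_continuous_pt. exists l. apply is_derive_Reals; auto. Qed.

Lemma quad_deriv (F : R -> R) t0 D dl M : 0 < dl ->
  (forall h, Rabs h <= dl -> Rabs (F (t0 + h) - F t0 - h * D) <= M * h ^ 2) -> is_derive F t0 D.
Proof.
 intros Hd H. apply is_derive_Reals. intros eps Heps.
 assert (Hd' : 0 < Rmin dl (eps / (Rabs M + 1))).
 { apply Rmin_pos; auto. apply Rdiv_lt_0_compat; auto. pose proof (Rabs_pos M); lra. }
 exists (mkposreal _ Hd'). intros h Hh0 Hh. simpl in Hh.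
 assert (Hh1 : Rabs h <= dl). { pose proof (Rmin_l dl (eps / (Rabs M + 1))). lra. }
 assert (Hh2 : Rabs h < eps / (Rabs M + 1)). { pose proof (Rmin_r dl (eps / (Rabs M + 1))). lra. }
 replace ((F (t0 + h) - F t0) / h - D) with ((F (t0 + h) - F t0 - h * D) / h) by (field; auto).
 unfold Rdiv. rewrite Rabs_mult, Rabs_inv.
 pose proof (H h Hh1). assert (0 < Rabs h) by (apply Rabs_pos_lt; auto).
 apply Rle_lt_trans with (M * h ^ 2 * / Rabs h).
 apply Rmult_le_compat_r; auto. left; apply Rinv_0_lt_compat; auto.
 replace (M * h ^ 2 * / Rabs h) with (M * Rabs h).
 2:{ rewrite <- (pow2_abs h). field. lra. }
 apply Rle_lt_trans with (Rabs M * Rabs h). apply Rmult_le_compat_r. apply Rabs_pos. apply Rle_abs.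
 apply Rmult_lt_reg_r with (/ (Rabs M + 1)). apply Rinv_0_lt_compat; pose proof (Rabs_pos M); lra.
 unfold Rdiv in Hh2. pose proof (Rabs_pos M).
 assert (Rabs M * / (Rabs M + 1) < 1). { apply Rmult_lt_reg_r with (Rabs M + 1). lra. field_simplify; lra. }
 nra.
Qed.

Lemma MVT2 (f df : R -> R) a b : (forall t, Rmin a b <= t <= Rmax a b -> is_derive f t (df t)) ->
  exists c, Rmin a b <= c <= Rmax a b /\ f b - f a = df c * (b - a).
Proof. intros H. apply MVT_gen. intros; apply H; lra. intros. eapply is_derive_cont. apply H; auto. Qed.

Lemma taylor2 (g g1 g2 : R -> R) t0 dl W : 0 < dl ->
  (forall t, t0 - dl <= t <= t0 + dl -> is_derive g t (g1 t) /\ is_derive g1 t (g2 t)) ->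
  (forall t, t0 - dl <= t <= t0 + dl -> Rabs (g2 t) <= W) ->
  forall h, Rabs h <= dl -> Rabs (g (t0 + h) - g t0 - h * g1 t0) <= W * h ^ 2.
Proof.
 intros Hd Hg HW h Hh. apply Rabs_le_between in Hh.
 assert (Hin : forall t, Rmin t0 (t0 + h) <= t <= Rmax t0 (t0 + h) -> t0 - dl <= t <= t0 + dl).
 { intros t Ht. unfold Rmin, Rmax in Ht. destruct (Rle_dec t0 (t0 + h)); lra. }
 destruct (MVT2 (fun t => g t - t * g1 t0) (fun t => g1 t - g1 t0) t0 (t0 + h)) as [c [Hc Ec]].
 { intros t Ht. pose proof (Hg t (Hin t Ht)) as [H1 _].
   assert (H2 : is_derive (fun t => t * g1 t0) t (g1 t0)) by (auto_derive; auto; ring).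
   apply is_derive_eq with (minus (g1 t) (g1 t0)).
   apply (is_derive_minus g (fun t => t * g1 t0)); auto.
   reflexivity. }
 destruct (MVT2 g1 g2 t0 c) as [d [Hdd Ed]].
 { intros t Ht. apply Hg. assert (Rmin t0 (t0 + h) <= t <= Rmax t0 (t0 + h)).
   { revert Ht Hc. unfold Rmin, Rmax. destruct (Rle_dec t0 c), (Rle_dec t0 (t0 + h)); lra. }
   apply Hin; auto. }
 assert (Hd2 : t0 - dl <= d <= t0 + dl).
 { apply Hin. revert Hdd Hc. unfold Rmin, Rmax. destruct (Rle_dec t0 c), (Rle_dec t0 (t0 + h)); lra. }
 replace (g (t0 + h) - g t0 - h * g1 t0) with (g2 d * (c - t0) * h) by (rewrite <- Ed; lra).
 rewrite !Rabs_mult. pose proof (HW d Hd2).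
 assert (Rabs (c - t0) <= Rabs h).
 { apply Rabs_le_between. pose proof (Rle_abs h) as A1. pose proof (Rle_abs (-h)) as A2. rewrite Rabs_Ropp in A2.
   revert Hc. unfold Rmin, Rmax. destruct (Rle_dec t0 (t0 + h)); lra. }
 rewrite <- (pow2_abs h). pose proof (Rabs_pos (g2 d)). pose proof (Rabs_pos (c - t0)).
 pose proof (Rabs_pos h). 
 apply Rle_trans with (W * Rabs h * Rabs h). 2: right; ring.
 apply Rmult_le_compat_r; auto. apply Rmult_le_compat; auto.
Qed.

Lemma decay_one (g : R -> R) a eta0 K0 R0 r0 eta : 0 < r0 -> 0 < eta <= eta0 -> 0 <= a ->
  (forall r, R0 <= r -> Rabs (g r) <= K0 * Rpower r (-(a + eta0))) ->
  (forall r, 0 < r -> continuity_pt g r) ->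
  exists K, 0 <= K /\ forall r, r0 <= r -> Rabs (g r) <= K * Rpower r (-(a + eta)).
Proof.
 intros Hr0 He Ha Hg Hc.
 set (R1 := Rmax 1 (Rmax R0 r0)).
 assert (HR1 : 1 <= R1 /\ R0 <= R1 /\ r0 <= R1).
 { unfold R1. pose proof (Rmax_l 1 (Rmax R0 r0)). pose proof (Rmax_r 1 (Rmax R0 r0)).
   pose proof (Rmax_l R0 r0). pose proof (Rmax_r R0 r0). lra. }
 destruct (continuity_ab_maj (fun r => Rabs (g r)) r0 R1) as [Mx [HM HMx]]. lra.
 { intros c Hc'. apply (continuity_pt_comp g Rabs). apply Hc; lra. apply Rcontinuity_abs. }
 set (M := Rabs (g Mx)).
 exists (Rabs K0 + M * Rpower R1 (a + eta)). split.
 { pose proof (Rabs_pos K0). pose proof (Rabs_pos (g Mx)). pose proof (Rpow_pos R1 (a + eta)). unfold M. nra. }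
 intros r Hr. pose proof (Rabs_pos K0). pose proof (Rabs_pos (g Mx)). pose proof (Rpow_pos R1 (a + eta)).
 pose proof (Rpow_pos r (-(a + eta))).
 destruct (Rle_dec R1 r).
 - assert (Rabs (g r) <= Rabs K0 * Rpower r (-(a + eta))).
   { eapply Rle_trans. apply Hg. lra. 
     apply Rle_trans with (Rabs K0 * Rpower r (- (a + eta0))).
     apply Rmult_le_compat_r. left; apply Rpow_pos. apply Rle_abs.
     apply Rmult_le_compat_l; auto. apply Rle_Rpower; lra. }
   assert (0 <= M * Rpower R1 (a+eta) * Rpower r (-(a+eta))) by (unfold M; repeat apply Rmult_le_pos; lra).
   rewrite Rmult_plus_distr_r. lra.
 - assert (Rabs (g r) <= M) by (apply HM; lra).
   assert (M <= M * Rpower R1 (a + eta) * Rpower r (-(a + eta))).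
   { rewrite Rmult_assoc. 
     assert (1 <= Rpower R1 (a + eta) * Rpower r (- (a + eta))).
     { apply Rle_trans with (Rpower R1 (a + eta) * Rpower R1 (- (a + eta))).
       rewrite Rpow_add. replace (a + eta + - (a + eta)) with 0 by ring. rewrite Rpower_O; lra.
       apply Rmult_le_compat_l. lra. apply Rpow_anti; lra. }
     unfold M. nra. }
   assert (0 <= Rabs K0 * Rpower r (-(a+eta))) by (apply Rmult_le_pos; lra).
   rewrite Rmult_plus_distr_r. lra.
Qed.

Lemma decay_all f : in_class_F f -> exists f1 f2 : R -> R,
  (forall r, 0 < r -> is_derive f r (f1 r) /\ is_derive f1 r (f2 r)) /\
  forall r0, 0 < r0 -> exists K eta, 0 <= K /\ 0 < eta /\ forall r, r0 <= r ->
    Rabs (f r) <= K * Rpower r (-(3/2 + eta)) /\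
    Rabs (f1 r) <= K * Rpower r (-(3/2 + eta + 1)) /\
    Rabs (f2 r) <= K * Rpower r (-(3/2 + eta + 2)).
Proof.
 intros [f1 [f2 [Hd [[e0 [He0 [K0 [R0 [_ H0]]]]] [[e1 [He1 [K1 [R1 [_ H1]]]]] [e2 [He2 [K2 [R2 [_ H2]]]]]]]]]].
 exists f1, f2. split. intros r Hr; destruct (Hd r Hr) as [A [B _]]; auto.
 intros r0 Hr0. set (eta := Rmin e0 (Rmin e1 e2)).
 assert (Heta : 0 < eta /\ eta <= e0 /\ eta <= e1 /\ eta <= e2).
 { unfold eta. pose proof (Rmin_l e0 (Rmin e1 e2)). pose proof (Rmin_r e0 (Rmin e1 e2)).
   pose proof (Rmin_l e1 e2). pose proof (Rmin_r e1 e2).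
   repeat split; try lra. apply Rmin_pos; auto. apply Rmin_pos; auto. }
 destruct (decay_one f (3/2 + 0) e0 K0 R0 r0 eta Hr0 ltac:(lra) ltac:(lra) H0) as [A0 [HA0 B0]].
 { intros r Hr. destruct (Hd r Hr) as [A _]. eapply is_derive_cont; eauto. }
 destruct (decay_one f1 (3/2 + 1) e1 K1 R1 r0 eta Hr0 ltac:(lra) ltac:(lra) H1) as [A1 [HA1 B1]].
 { intros r Hr. destruct (Hd r Hr) as [_ [A _]]. eapply is_derive_cont; eauto. }
 destruct (decay_one f2 (3/2 + 2) e2 K2 R2 r0 eta Hr0 ltac:(lra) ltac:(lra) H2) as [A2 [HA2 B2]].
 { intros r Hr. destruct (Hd r Hr) as [_ [_ A]]. apply continuity_pt_filterlim. auto. }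
 exists (A0 + A1 + A2), eta. split. lra. split. lra. intros r Hr.
 assert (Hr' : 0 < r) by lra.
 pose proof (Rpow_pos r (-(3/2 + eta))). pose proof (Rpow_pos r (-(3/2 + eta + 1))). pose proof (Rpow_pos r (-(3/2 + eta + 2))).
 replace (3/2 + 0 + eta) with (3/2 + eta) in B0 by ring.
 replace (3/2 + 1 + eta) with (3/2 + eta + 1) in B1 by ring.
 replace (3/2 + 2 + eta) with (3/2 + eta + 2) in B2 by ring.
 specialize (B0 r Hr). specialize (B1 r Hr). specialize (B2 r Hr).
 repeat split; nra.
Qed.

Lemma lim_abs_le (a : nat -> R) (l B : R) : is_lim_seq a l -> (forall N, Rabs (a N) <= B) -> Rabs l <= B.
Proof. intros H HB. pose proof (is_lim_seq_abs _ _ H). 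
 pose proof (is_lim_seq_le _ _ _ _ HB H0 (is_lim_seq_const B)). simpl in H1. auto. Qed.

Lemma Rpow_shift x a k : 0 < x -> Rpower x (-(a + k)) * Rpower x k = Rpower x (-a).
Proof. intros. rewrite Rpow_add. f_equal. ring. Qed.

Section Deriv.
Variables (f f1 f2 : R -> R) (Q Q1 Q2 : R -> Z3 -> R) (t0 dl lam c K eta : R).
Hypothesis Hdl : 0 < dl.
Hypothesis Hlam : 0 < lam.
Hypothesis Hc : 0 <= c.
Hypothesis HK : 0 <= K.
Hypothesis Heta : 0 < eta.
Hypothesis Hf : forall r, 0 < r -> is_derive f r (f1 r) /\ is_derive f1 r (f2 r).
Hypothesis Hdec : forall r, lam <= r ->
    Rabs (f r) <= K * Rpower r (-(3/2 + eta)) /\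
    Rabs (f1 r) <= K * Rpower r (-(3/2 + eta + 1)) /\
    Rabs (f2 r) <= K * Rpower r (-(3/2 + eta + 2)).
Hypothesis HQ : forall t q, t0 - dl <= t <= t0 + dl -> isz q = false ->
   is_derive (fun s => Q s q) t (Q1 t q) /\ is_derive (fun s => Q1 s q) t (Q2 t q) /\
   lam * rho q <= Q t q /\ Rabs (Q1 t q) <= c * rho q /\ Rabs (Q2 t q) <= c * rho q.

Let s := 3/2 + eta.

Lemma Qpow t q a : t0 - dl <= t <= t0 + dl -> isz q = false -> 0 <= a ->
  Rpower (Q t q) (-a) <= Rpower lam (-a) * Rpower (rho q) (-a).
Proof. intros Ht Hq Ha. destruct (HQ t q Ht Hq) as [_ [_ [H _]]]. pose proof (rho_ge1 q Hq).
 rewrite <- Rpow_mul by lra. apply Rpow_anti; auto. split; auto. nra. Qed.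

Lemma Qge t q : t0 - dl <= t <= t0 + dl -> isz q = false -> lam <= Q t q.
Proof. intros Ht Hq. destruct (HQ t q Ht Hq) as [_ [_ [H _]]]. pose proof (rho_ge1 q Hq). nra. Qed.

Definition Phi t q := if isz q then 0 else f (Q t q).
Definition Psi q := if isz q then 0 else f1 (Q t0 q) * Q1 t0 q.

Lemma Summ_Phi t : t0 - dl <= t <= t0 + dl -> Summ (Phi t).
Proof. intros Ht. exists (K * Rpower lam (-s)), eta. split. apply Rmult_le_pos; auto. left; apply Rpow_pos.
 split; auto. intros q. unfold Phi, hs. destruct (isz q) eqn:Hq. rewrite Rabs_R0; lra.
 destruct (Hdec (Q t q) (Qge t q Ht Hq)) as [H _]. eapply Rle_trans. apply H.
 rewrite Rmult_assoc. apply Rmult_le_compat_l; auto. apply Qpow; auto. unfold s; lra. Qed.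

Lemma Summ_Psi : Summ Psi.
Proof. assert (Ht : t0 - dl <= t0 <= t0 + dl) by lra.
 exists (K * c * Rpower lam (-(s + 1))), eta. split. apply Rmult_le_pos. apply Rmult_le_pos; auto. left; apply Rpow_pos.
 split; auto. intros q. unfold Psi, hs. destruct (isz q) eqn:Hq. rewrite Rabs_R0; lra.
 destruct (Hdec (Q t0 q) (Qge t0 q Ht Hq)) as [_ [H _]]. destruct (HQ t0 q Ht Hq) as [_ [_ [_ [H1 _]]]].
 pose proof (Qpow t0 q (s + 1) Ht Hq ltac:(unfold s; lra)). pose proof (rho_ge1 q Hq).
 rewrite Rabs_mult. 
 apply Rle_trans with (K * (Rpower lam (-(s+1)) * Rpower (rho q) (-(s+1))) * (c * rho q)).
 apply Rmult_le_compat; try apply Rabs_pos. eapply Rle_trans. apply H. apply Rmult_le_compat_l; auto. auto.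
 rewrite (Rpow_x (rho q)) at 2 by lra.
 replace (K * (Rpower lam (- (s + 1)) * Rpower (rho q) (- (s + 1))) * (c * Rpower (rho q) 1)) with
   (K * c * Rpower lam (- (s + 1)) * (Rpower (rho q) (- (s + 1)) * Rpower (rho q) 1)) by ring.
 rewrite Rpow_shift by lra. fold s. lra.
Qed.

Let Kw := K * c ^ 2 * Rpower lam (-(s + 2)) + K * c * Rpower lam (-(s + 1)).

Lemma term_taylor q h : Rabs h <= dl ->
  Rabs (Phi (t0 + h) q - Phi t0 q - h * Psi q) <= Kw * hs eta q * h ^ 2.
Proof.
 intros Hh. unfold Phi, Psi, hs. destruct (isz q) eqn:Hq.
 { replace (0 - 0 - h * 0) with 0 by ring. rewrite Rabs_R0. lra. }
 apply (taylor2 (fun t => f (Q t q)) (fun t => f1 (Q t q) * Q1 t q)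
   (fun t => f2 (Q t q) * Q1 t q ^ 2 + f1 (Q t q) * Q2 t q) t0 dl); auto.
 - intros t Ht. destruct (HQ t q Ht Hq) as [D1 [D2 _]].
   assert (HQp : 0 < Q t q) by (pose proof (Qge t q Ht Hq); lra).
   destruct (Hf _ HQp) as [F1 F2]. split.
   + eapply is_derive_eq. apply (is_derive_comp f (fun s => Q s q)); eauto.
     unfold scal; simpl; unfold mult; simpl. ring.
   + eapply is_derive_eq. apply is_derive_Reals.
     apply (derivable_pt_lim_mult (fun s => f1 (Q s q)) (fun s => Q1 s q)).
     * apply is_derive_Reals. eapply is_derive_eq. apply (is_derive_comp f1 (fun s => Q s q)); eauto. reflexivity.
     * apply is_derive_Reals. eauto.
     * unfold scal; simpl; unfold mult; simpl. ring.
 - intros t Ht. destruct (HQ t q Ht Hq) as [_ [_ [_ [H1 H2]]]].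
   destruct (Hdec (Q t q) (Qge t q Ht Hq)) as [_ [G1 G2]].
   pose proof (Qpow t q (s + 1) Ht Hq ltac:(unfold s; lra)).
   pose proof (Qpow t q (s + 2) Ht Hq ltac:(unfold s; lra)). pose proof (rho_ge1 q Hq).
   eapply Rle_trans. apply Rabs_triang. rewrite !Rabs_mult.
   assert (E1 : Rabs (f2 (Q t q)) * Rabs (Q1 t q ^ 2) <= K * c ^ 2 * Rpower lam (-(s + 2)) * Rpower (rho q) (-s)).
   { rewrite <- RPow_abs. 
     apply Rle_trans with (K * (Rpower lam (-(s+2)) * Rpower (rho q) (-(s+2))) * (c * rho q) ^ 2).
     apply Rmult_le_compat; try apply Rabs_pos. apply pow_le, Rabs_pos.
     eapply Rle_trans. apply G2. apply Rmult_le_compat_l; auto.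
     apply pow_incr. split; auto. apply Rabs_pos.
     replace (K * (Rpower lam (- (s + 2)) * Rpower (rho q) (- (s + 2))) * (c * rho q) ^ 2) with
       (K * c ^ 2 * Rpower lam (- (s + 2)) * (Rpower (rho q) (- (s + 2)) * Rpower (rho q) 2)) by
       (rewrite <- Rpow_sqr by lra; ring).
     rewrite Rpow_shift by lra. lra. }
   assert (E2 : Rabs (f1 (Q t q)) * Rabs (Q2 t q) <= K * c * Rpower lam (-(s + 1)) * Rpower (rho q) (-s)).
   { apply Rle_trans with (K * (Rpower lam (-(s+1)) * Rpower (rho q) (-(s+1))) * (c * rho q)).
     apply Rmult_le_compat; try apply Rabs_pos. 
     eapply Rle_trans. apply G1. apply Rmult_le_compat_l; auto. auto.
     rewrite (Rpow_x (rho q)) at 2 by lra.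
     replace (K * (Rpower lam (- (s + 1)) * Rpower (rho q) (- (s + 1))) * (c * Rpower (rho q) 1)) with
       (K * c * Rpower lam (- (s + 1)) * (Rpower (rho q) (- (s + 1)) * Rpower (rho q) 1)) by ring.
     rewrite Rpow_shift by lra. lra. }
   unfold Kw. fold s. lra.
Qed.

Theorem deriv_LB : is_derive (fun t => LB (Phi t)) t0 (LB Psi).
Proof.
 set (Htot := SumBox 1 (hs eta) + 26 / (2 * eta)).
 assert (HKw : 0 <= Kw).
 { unfold Kw. pose proof (Rpow_pos lam (-(s+2))). pose proof (Rpow_pos lam (-(s+1))).
   assert (0 <= K * c ^ 2 * Rpower lam (- (s + 2))) by (apply Rmult_le_pos; [apply Rmult_le_pos; [|apply pow_le]|]; lra).
   assert (0 <= K * c * Rpower lam (- (s + 1))) by (apply Rmult_le_pos; [apply Rmult_le_pos|]; lra). lra. }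
 apply (quad_deriv _ t0 (LB Psi) dl (Kw * Htot)); auto.
 intros h Hh.
 assert (Ht1 : t0 - dl <= t0 + h <= t0 + dl) by (apply Rabs_le_between in Hh; lra).
 assert (Ht0 : t0 - dl <= t0 <= t0 + dl) by lra.
 apply (lim_abs_le (fun N => SumBox N (Phi (t0 + h)) - SumBox N (Phi t0) - h * SumBox N Psi)).
 - apply is_lim_seq_minus'. apply is_lim_seq_minus'; apply LB_correct; apply Summ_Phi; auto.
   apply (is_lim_seq_scal_l _ h (LB Psi)). apply LB_correct, Summ_Psi.
 - intros N. unfold SumBox. rewrite <- lsum_scal, <- !lsum_minus.
   eapply Rle_trans. apply lsum_abs. eapply Rle_trans. apply lsum_le. intros q _. apply term_taylor; auto.
   replace (lsum (fun x => Kw * hs eta x * h ^ 2) (boxlist N)) with (Kw * h ^ 2 * SumBox N (hs eta)).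
   2:{ unfold SumBox. rewrite <- lsum_scal. apply lsum_ext. intros; ring. }
   pose proof (total_hs eta N Heta). fold Htot in H. 
   assert (0 <= Kw * h ^ 2) by (apply Rmult_le_pos; auto; apply pow2_ge_0). replace (Kw * Htot * h ^ 2) with (Kw * h ^ 2 * Htot) by ring.
   apply Rmult_le_compat_l; auto.
Qed.
End Deriv.

Definition QLq (V u v x y z : R) (q : Z3) : R := let '(m, n, p) := q in QL V u v x y z m n p.

Lemma sum_n_lsum (a : nat -> R) n : sum_n a n = lsum a (seq 0 (S n)).
Proof. induction n. rewrite sum_O. simpl. ring.
 rewrite sum_Sn, IHn. rewrite (seq_S (S n) 0), lsum_app. simpl. unfold plus; simpl. ring. Qed.

Lemma lsum_prod {A B} (g : A * B -> R) l l' : lsum g (list_prod l l') = lsum (fun x => lsum (fun y => g (x, y)) l') l.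
Proof. induction l; simpl; auto. rewrite lsum_app, lsum_map, IHl. auto. Qed.

Lemma Ef_LB f V u v x y z : Ef f V u v x y z = LB (fun q => if isz q then 0 else f (QLq V u v x y z q)).
Proof.
 unfold Ef, LB. f_equal. apply Lim_seq_ext. intros N. unfold box_sum, SumBox, boxlist.
 rewrite sum_n_lsum, !lsum_prod. unfold zrange. rewrite lsum_map. apply lsum_ext. intros i _.
 rewrite sum_n_lsum, lsum_map. apply lsum_ext. intros j _.
 rewrite sum_n_lsum, lsum_map. apply lsum_ext. intros k _. reflexivity.
Qed.

Lemma sq3 a b c : (a + b + c) ^ 2 <= 3 * (a ^ 2 + b ^ 2 + c ^ 2).
Proof. pose proof (pow2_ge_0 (a - b)). pose proof (pow2_ge_0 (b - c)). pose proof (pow2_ge_0 (a - c)). nra. Qed.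
Lemma sq2 a b : (a + b) ^ 2 <= 2 * (a ^ 2 + b ^ 2).
Proof. pose proof (pow2_ge_0 (a - b)). nra. Qed.
Lemma scl x N : -1 <= x <= 1 -> (x * N) ^ 2 <= N ^ 2.
Proof. intros. assert (x^2 <= 1) by nra. replace ((x*N)^2) with (x^2 * N^2) by ring.
 pose proof (pow2_ge_0 N). nra. Qed.
Lemma ab_le a b : Rabs (a * b) <= (a ^ 2 + b ^ 2) / 2.
Proof. rewrite Rabs_mult. rewrite <- (pow2_abs a), <- (pow2_abs b). 
 pose proof (pow2_ge_0 (Rabs a - Rabs b)). nra. Qed.

Lemma region_facts x y z M N P : -1 <= x <= 1 -> -1 <= y <= 1 -> -1 <= z <= 1 ->
  (M + x * N + y * P) ^ 2 <= 3 * (M ^ 2 + N ^ 2 + P ^ 2) /\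
  (N + z * P) ^ 2 <= 2 * (M ^ 2 + N ^ 2 + P ^ 2) /\
  M ^ 2 + N ^ 2 + P ^ 2 <= 12 * ((M + x * N + y * P) ^ 2 + (N + z * P) ^ 2 + P ^ 2) /\
  Rabs ((M + x * N + y * P) * N) <= 2 * (M ^ 2 + N ^ 2 + P ^ 2) /\
  Rabs ((M + x * N + y * P) * P) <= 2 * (M ^ 2 + N ^ 2 + P ^ 2) /\
  Rabs ((N + z * P) * P) <= 2 * (M ^ 2 + N ^ 2 + P ^ 2).
Proof.
 intros Hx Hy Hz.
 pose proof (pow2_ge_0 M). pose proof (pow2_ge_0 N). pose proof (pow2_ge_0 P).
 assert (HA : (M + x * N + y * P) ^ 2 <= 3 * (M ^ 2 + N ^ 2 + P ^ 2)).
 { pose proof (sq3 M (x * N) (y * P)). pose proof (scl x N Hx). pose proof (scl y P Hy). lra. }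
 assert (HB : (N + z * P) ^ 2 <= 2 * (M ^ 2 + N ^ 2 + P ^ 2)).
 { pose proof (sq2 N (z * P)). pose proof (scl z P Hz). lra. }
 repeat split; auto.
 - set (A := M + x * N + y * P). set (B := N + z * P).
   assert (N ^ 2 <= 2 * B ^ 2 + 2 * P ^ 2).
   { replace N with (B + (- z) * P) by (unfold B; ring). pose proof (sq2 B (-z * P)). pose proof (scl (-z) P ltac:(lra)). lra. }
   assert (M ^ 2 <= 3 * A ^ 2 + 3 * N ^ 2 + 3 * P ^ 2).
   { replace M with (A + (- x) * N + (- y) * P) by (unfold A; ring). pose proof (sq3 A (-x * N) (-y * P)).
     pose proof (scl (-x) N ltac:(lra)). pose proof (scl (-y) P ltac:(lra)). lra. }
   pose proof (pow2_ge_0 A). pose proof (pow2_ge_0 B). lra.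
 - pose proof (ab_le (M + x * N + y * P) N). lra.
 - pose proof (ab_le (M + x * N + y * P) P). lra.
 - pose proof (ab_le (N + z * P) P). lra.
Qed.

Lemma Cst_pos V : 0 < Cst V.
Proof. unfold Cst. apply Rmult_lt_0_compat; apply Rpow_pos. Qed.

Lemma inv_bounds t : 1/2 <= t <= 2 -> 1/2 <= / t <= 2.
Proof. intros H. split.
 replace (1/2) with (/ 2) by field. apply Rinv_le_contravar; lra.
 apply Rle_trans with (/ (1/2)). apply Rinv_le_contravar; lra. right; field. Qed.

Lemma rho_eq m n p : rho (m, n, p) = IZR m ^ 2 + IZR n ^ 2 + IZR p ^ 2.
Proof. reflexivity. Qed.

Lemma QL_lower V u v x y z m n p : 1/2 <= u <= 2 -> 1/2 <= v <= 2 -> -1 <= x <= 1 -> -1 <= y <= 1 -> -1 <= z <= 1 ->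
  Cst V / 1536 * rho (m, n, p) <= QL V u v x y z m n p.
Proof.
 intros Hu Hv Hx Hy Hz. rewrite rho_eq. unfold QL.
 set (M := IZR m). set (N := IZR n). set (P := IZR p). 
 destruct (region_facts x y z M N P Hx Hy Hz) as [_ [_ [H3 _]]].
 set (A := M + x * N + y * P) in *. set (B := N + z * P) in *.
 pose proof (Cst_pos V). pose proof (inv_bounds u Hu). pose proof (inv_bounds v Hv).
 replace (u ^ 3 / (2 * v ^ 2)) with (u ^ 3 * (/ v) ^ 2 / 2) by (field; lra).
 assert (1/8 <= u ^ 3) by nra. assert (1/4 <= (/ v) ^ 2) by nra.
 assert (1/64 <= u ^ 3 * (/ v) ^ 2 / 2) by nra.
 assert (1/4 <= v ^ 2) by nra.
 pose proof (pow2_ge_0 A). pose proof (pow2_ge_0 B). pose proof (pow2_ge_0 P).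
 assert (I1 : (A ^ 2 + B ^ 2 + P ^ 2) / 64 <= A ^ 2 + v ^ 2 * B ^ 2 + u ^ 3 * (/ v) ^ 2 / 2 * P ^ 2) by nra.
 set (S := A ^ 2 + B ^ 2 + P ^ 2) in *. set (I := A ^ 2 + v ^ 2 * B ^ 2 + u ^ 3 * (/ v) ^ 2 / 2 * P ^ 2) in *.
 assert (E1 : Cst V / 1536 * (M ^ 2 + N ^ 2 + P ^ 2) <= Cst V * (S / 128)).
 { replace (Cst V / 1536 * (M ^ 2 + N ^ 2 + P ^ 2)) with (Cst V * ((M ^ 2 + N ^ 2 + P ^ 2) / 1536)) by (unfold Rdiv; ring).
   apply Rmult_le_compat_l; lra. }
 assert (E2 : S / 128 <= / u * I).
 { replace (S / 128) with (1/2 * (S / 64)) by field. assert (0 <= S) by (unfold S; lra). apply Rmult_le_compat; lra. }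
 replace (Cst V / u * I) with (Cst V * (/ u * I)) by (unfold Rdiv; ring).
 eapply Rle_trans. apply E1. apply Rmult_le_compat_l; lra.
Qed.

Definition Q1u V v x y z t (q : Z3) := let '(m, n, p) := q in
  Cst V * (-((IZR m + x * IZR n + y * IZR p) ^ 2 + v ^ 2 * (IZR n + z * IZR p) ^ 2) * (/ t) ^ 2 + t * IZR p ^ 2 * (/ v) ^ 2).
Definition Q2u V v x y z t (q : Z3) := let '(m, n, p) := q in
  Cst V * (2 * ((IZR m + x * IZR n + y * IZR p) ^ 2 + v ^ 2 * (IZR n + z * IZR p) ^ 2) * (/ t) ^ 3 + IZR p ^ 2 * (/ v) ^ 2).

Lemma derU1 V v x y z t m n p : t <> 0 -> v <> 0 ->
  is_derive (fun s => QLq V s v x y z (m, n, p)) t (Q1u V v x y z t (m, n, p)).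
Proof. intros Ht Hv. simpl. unfold QL. auto_derive; try solve [repeat split; try assumption; intro; nra]. field. auto. Qed.

Lemma derU2 V v x y z t m n p : t <> 0 -> v <> 0 ->
  is_derive (fun s => Q1u V v x y z s (m, n, p)) t (Q2u V v x y z t (m, n, p)).
Proof. intros Ht Hv. simpl. auto_derive; try solve [repeat split; try assumption; intro; nra]. field. auto. Qed.

Lemma pb a b A B : 0 <= a <= A -> 0 <= b <= B -> 0 <= a * b <= A * B.
Proof. intros. split. apply Rmult_le_pos; lra. apply Rmult_le_compat; lra. Qed.

Lemma bnd_C V X r k : Rabs X <= k * r -> 0 <= r -> k <= 1000 -> Rabs (Cst V * X) <= 1000 * Cst V * r.
Proof. intros. pose proof (Cst_pos V). rewrite Rabs_mult, Rabs_pos_eq by lra.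
 rewrite Rmult_comm with (r1 := 1000), Rmult_assoc. apply Rmult_le_compat_l. lra. nra. Qed.

Definition Hderiv (f f1 f2 : R -> R) := forall r, 0 < r -> is_derive f r (f1 r) /\ is_derive f1 r (f2 r).
Definition Hdecay (f f1 f2 : R -> R) := forall r0, 0 < r0 -> exists K eta, 0 <= K /\ 0 < eta /\ forall r, r0 <= r ->
    Rabs (f r) <= K * Rpower r (-(3/2 + eta)) /\
    Rabs (f1 r) <= K * Rpower r (-(3/2 + eta + 1)) /\
    Rabs (f2 r) <= K * Rpower r (-(3/2 + eta + 2)).

Lemma Ef_deriv_gen f f1 f2 (Qf Q1 Q2 : R -> Z3 -> R) t0 (Efun : R -> R) lam c :
  (forall t, Efun t = LB (fun q => if isz q then 0 else f (Qf t q))) ->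
  Hderiv f f1 f2 -> Hdecay f f1 f2 -> 0 < lam -> 0 <= c ->
  (forall t q, t0 - 1/4 <= t <= t0 + 1/4 -> isz q = false ->
   is_derive (fun s => Qf s q) t (Q1 t q) /\ is_derive (fun s => Q1 s q) t (Q2 t q) /\
   lam * rho q <= Qf t q /\ Rabs (Q1 t q) <= c * rho q /\ Rabs (Q2 t q) <= c * rho q) ->
  is_derive Efun t0 (LB (fun q => if isz q then 0 else f1 (Qf t0 q) * Q1 t0 q)).
Proof.
 intros HE Hf Hd Hl Hc HQ. destruct (Hd lam Hl) as [K [eta [HK [Heta Hb]]]].
 apply is_derive_ext with (fun t => LB (Phi f Qf t)). { intros t. rewrite HE. reflexivity. }
 apply (deriv_LB f f1 f2 Qf Q1 Q2 t0 (1/4) lam c K eta); auto. lra.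
Qed.

Lemma dirU f f1 f2 V u0 v x y z : Hderiv f f1 f2 -> Hdecay f f1 f2 ->
  3/4 <= u0 <= 7/4 -> 1/2 <= v <= 2 -> -1 <= x <= 1 -> -1 <= y <= 1 -> -1 <= z <= 1 ->
  is_derive (fun t => Ef f V t v x y z) u0
    (LB (fun q => if isz q then 0 else f1 (QLq V u0 v x y z q) * Q1u V v x y z u0 q)).
Proof.
 intros Hf Hd Hu Hv Hx Hy Hz.
 apply (Ef_deriv_gen f f1 f2 (fun t q => QLq V t v x y z q) (fun t q => Q1u V v x y z t q)
   (fun t q => Q2u V v x y z t q) u0 _ (Cst V / 1536) (1000 * Cst V)); auto.
 { intros; apply Ef_LB. }
 { pose proof (Cst_pos V); lra. } { pose proof (Cst_pos V); lra. }
 intros t [[m n] p] Ht _. assert (Ht' : 1/2 <= t <= 2) by lra.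
 split. apply derU1; lra. split. apply derU2; lra. split. apply QL_lower; auto.
 rewrite rho_eq. unfold Q1u, Q2u. cbv beta iota.
 set (M := IZR m). set (N := IZR n). set (P := IZR p).
 destruct (region_facts x y z M N P Hx Hy Hz) as [F1 [F2 [F3 [F4 [F5 F6]]]]].
 pose proof (pow2_ge_0 M). pose proof (pow2_ge_0 N). pose proof (pow2_ge_0 P).
 pose proof (pow2_ge_0 (M + x * N + y * P)). pose proof (pow2_ge_0 (N + z * P)).
 set (r := M ^ 2 + N ^ 2 + P ^ 2) in *.
 assert (HP : P ^ 2 <= r) by (unfold r; lra). assert (HN : N ^ 2 <= r) by (unfold r; lra).
 pose proof (inv_bounds t Ht'). pose proof (inv_bounds v Hv).
 assert (V2 : 0 <= v ^ 2 <= 4) by nra.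
 assert (IT2 : 0 <= (/ t) ^ 2 <= 4) by nra.
 assert (IT3 : 0 <= (/ t) ^ 3 <= 8) by nra.
 assert (IV2 : 0 <= (/ v) ^ 2 <= 4) by nra.
 assert (X0 : 0 <= (M + x * N + y * P) ^ 2 + v ^ 2 * (N + z * P) ^ 2 <= 11 * r).
 { pose proof (pb (v ^ 2) ((N + z * P) ^ 2) 4 (2 * r) V2 ltac:(lra)). lra. }
 split.
 - apply bnd_C with 52; [|lra|lra]. apply Rabs_le_between.
   pose proof (pb _ _ _ _ X0 IT2) as B1. pose proof (pb t (P ^ 2) 2 r ltac:(lra) ltac:(lra)) as B2.
   pose proof (pb _ _ _ _ B2 IV2) as B3. lra.
 - apply bnd_C with 180; [|lra|lra]. apply Rabs_le_between.
   pose proof (pb _ _ _ _ X0 IT3). pose proof (pb (P ^ 2) _ r 4 ltac:(lra) IV2). lra.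
Qed.

Definition Q1v (V u x y z t : R) (q : Z3) := let '(m, n, p) := q in
  Cst V * (/ u * (2 * t * (IZR n + z * IZR p) ^ 2 - u ^ 3 * IZR p ^ 2 * (/ t) ^ 3)).
Definition Q2v (V u x y z t : R) (q : Z3) := let '(m, n, p) := q in
  Cst V * (/ u * (2 * (IZR n + z * IZR p) ^ 2 + 3 * u ^ 3 * IZR p ^ 2 * (/ t) ^ 4)).
Definition Q1x (V u v y z t : R) (q : Z3) := let '(m, n, p) := q in
  Cst V * (/ u * (2 * (IZR m + t * IZR n + y * IZR p) * IZR n)).
Definition Q2x (V u v y z t : R) (q : Z3) := let '(m, n, p) := q in
  Cst V * (/ u * (2 * IZR n ^ 2)).
Definition Q1y (V u v x z t : R) (q : Z3) := let '(m, n, p) := q in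
  Cst V * (/ u * (2 * (IZR m + x * IZR n + t * IZR p) * IZR p)).
Definition Q2y (V u v x z t : R) (q : Z3) := let '(m, n, p) := q in
  Cst V * (/ u * (2 * IZR p ^ 2)).
Definition Q1z (V u v x y t : R) (q : Z3) := let '(m, n, p) := q in
  Cst V * (/ u * (2 * v ^ 2 * (IZR n + t * IZR p) * IZR p)).
Definition Q2z (V u v x y t : R) (q : Z3) := let '(m, n, p) := q in
  Cst V * (/ u * (2 * v ^ 2 * IZR p ^ 2)).

Lemma abs_inv_mul u Y k r : 1/2 <= u <= 2 -> Rabs Y <= k * r -> 0 <= k -> Rabs (/ u * Y) <= 2 * k * r.
Proof. intros Hu HY Hk. pose proof (inv_bounds u Hu). rewrite Rabs_mult, Rabs_pos_eq by lra.
 pose proof (Rabs_pos Y). nra. Qed.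

Lemma dirV f f1 f2 V u v0 x y z : Hderiv f f1 f2 -> Hdecay f f1 f2 ->
  1/2 <= u <= 2 -> 3/4 <= v0 <= 7/4 -> -1 <= x <= 1 -> -1 <= y <= 1 -> -1 <= z <= 1 ->
  is_derive (fun t => Ef f V u t x y z) v0
    (LB (fun q => if isz q then 0 else f1 (QLq V u v0 x y z q) * Q1v V u x y z v0 q)).
Proof.
 intros Hf Hd Hu Hv Hx Hy Hz.
 apply (Ef_deriv_gen f f1 f2 (fun t q => QLq V u t x y z q) (fun t q => Q1v V u x y z t q)
   (fun t q => Q2v V u x y z t q) v0 _ (Cst V / 1536) (1000 * Cst V)); auto.
 { intros; apply Ef_LB. }
 { pose proof (Cst_pos V); lra. } { pose proof (Cst_pos V); lra. }
 intros t [[m n] p] Ht _. assert (Ht' : 1/2 <= t <= 2) by lra.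
 assert (Htn : t <> 0) by (intro; lra). assert (Hun : u <> 0) by (intro; lra).
 split. { simpl. unfold QL. auto_derive; try solve [repeat split; try assumption; intro; nra]. unfold Q1v. field. auto. }
 split. { simpl. auto_derive; try solve [repeat split; try assumption; intro; nra]. field. auto. }
 split. apply QL_lower; auto.
 rewrite rho_eq. unfold Q1v, Q2v. cbv beta iota.
 set (M := IZR m). set (N := IZR n). set (P := IZR p).
 destruct (region_facts x y z M N P Hx Hy Hz) as [F1 [F2 [F3 [F4 [F5 F6]]]]].
 pose proof (pow2_ge_0 M). pose proof (pow2_ge_0 N). pose proof (pow2_ge_0 P).
 pose proof (pow2_ge_0 (M + x * N + y * P)). pose proof (pow2_ge_0 (N + z * P)).
 set (r := M ^ 2 + N ^ 2 + P ^ 2) in *.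
 assert (HP : P ^ 2 <= r) by (unfold r; lra). assert (HN : N ^ 2 <= r) by (unfold r; lra).
 pose proof (inv_bounds t Ht').
 assert (U3 : 0 <= u ^ 3 <= 8) by nra.
 assert (IT3 : 0 <= (/ t) ^ 3 <= 8) by nra.
 assert (IT4 : 0 <= (/ t) ^ 4 <= 16) by nra.
 split.
 - apply bnd_C with 128; [|lra|lra]. replace 128 with (2 * 64) by ring. apply abs_inv_mul; auto; [|lra].
   apply Rabs_le_between.
   pose proof (pb (2 * t) ((N + z * P) ^ 2) 4 (2 * r) ltac:(lra) ltac:(lra)) as B1.
   pose proof (pb (u ^ 3) (P ^ 2) 8 r U3 ltac:(lra)) as B2.
   pose proof (pb _ _ _ _ B2 IT3) as B3. lra.
 - apply bnd_C with 776; [|lra|lra]. replace 776 with (2 * 388) by ring. apply abs_inv_mul; auto; [|lra].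
   apply Rabs_le_between.
   pose proof (pb (3 * u ^ 3) (P ^ 2) 24 r ltac:(lra) ltac:(lra)) as B2.
   pose proof (pb _ _ _ _ B2 IT4) as B3. lra.
Qed.

Lemma dirX f f1 f2 V u v x0 y z : Hderiv f f1 f2 -> Hdecay f f1 f2 ->
  1/2 <= u <= 2 -> 1/2 <= v <= 2 -> -3/4 <= x0 <= 3/4 -> -1 <= y <= 1 -> -1 <= z <= 1 ->
  is_derive (fun t => Ef f V u v t y z) x0
    (LB (fun q => if isz q then 0 else f1 (QLq V u v x0 y z q) * Q1x V u v y z x0 q)).
Proof.
 intros Hf Hd Hu Hv Hx Hy Hz.
 apply (Ef_deriv_gen f f1 f2 (fun t q => QLq V u v t y z q) (fun t q => Q1x V u v y z t q)
   (fun t q => Q2x V u v y z t q) x0 _ (Cst V / 1536) (1000 * Cst V)); auto.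
 { intros; apply Ef_LB. }
 { pose proof (Cst_pos V); lra. } { pose proof (Cst_pos V); lra. }
 intros t [[m n] p] Ht _. assert (Ht' : -1 <= t <= 1) by lra.
 assert (Hun : u <> 0) by (intro; lra). assert (Hvn : v <> 0) by (intro; lra).
 split. { simpl. unfold QL. auto_derive; try solve [repeat split; try assumption; intro; nra]. unfold Q1x. field. auto. }
 split. { simpl. auto_derive; try solve [repeat split; try assumption; intro; nra]. field. auto. }
 split. apply QL_lower; auto.
 rewrite rho_eq. unfold Q1x, Q2x. cbv beta iota.
 set (M := IZR m). set (N := IZR n). set (P := IZR p).
 destruct (region_facts t y z M N P Ht' Hy Hz) as [F1 [F2 [F3 [F4 [F5 F6]]]]].
 pose proof (pow2_ge_0 M). pose proof (pow2_ge_0 N). pose proof (pow2_ge_0 P).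
 set (r := M ^ 2 + N ^ 2 + P ^ 2) in *.
 assert (HP : P ^ 2 <= r) by (unfold r; lra). assert (HN : N ^ 2 <= r) by (unfold r; lra).
 split.
 - apply bnd_C with 8; [|lra|lra]. replace 8 with (2 * 4) by ring. apply abs_inv_mul; auto; [|lra].
   replace (2 * (M + t * N + y * P) * N) with (2 * ((M + t * N + y * P) * N)) by ring.
   rewrite Rabs_mult, Rabs_pos_eq by lra. lra.
 - apply bnd_C with 4; [|lra|lra]. replace 4 with (2 * 2) by ring. apply abs_inv_mul; auto; [|lra].
   rewrite Rabs_pos_eq by lra. lra.
Qed.

Lemma dirY f f1 f2 V u v x y0 z : Hderiv f f1 f2 -> Hdecay f f1 f2 ->
  1/2 <= u <= 2 -> 1/2 <= v <= 2 -> -1 <= x <= 1 -> -3/4 <= y0 <= 3/4 -> -1 <= z <= 1 ->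
  is_derive (fun t => Ef f V u v x t z) y0
    (LB (fun q => if isz q then 0 else f1 (QLq V u v x y0 z q) * Q1y V u v x z y0 q)).
Proof.
 intros Hf Hd Hu Hv Hx Hy Hz.
 apply (Ef_deriv_gen f f1 f2 (fun t q => QLq V u v x t z q) (fun t q => Q1y V u v x z t q)
   (fun t q => Q2y V u v x z t q) y0 _ (Cst V / 1536) (1000 * Cst V)); auto.
 { intros; apply Ef_LB. }
 { pose proof (Cst_pos V); lra. } { pose proof (Cst_pos V); lra. }
 intros t [[m n] p] Ht _. assert (Ht' : -1 <= t <= 1) by lra.
 assert (Hun : u <> 0) by (intro; lra). assert (Hvn : v <> 0) by (intro; lra).
 split. { simpl. unfold QL. auto_derive; try solve [repeat split; try assumption; intro; nra]. unfold Q1y. field. auto. }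
 split. { simpl. auto_derive; try solve [repeat split; try assumption; intro; nra]. field. auto. }
 split. apply QL_lower; auto.
 rewrite rho_eq. unfold Q1y, Q2y. cbv beta iota.
 set (M := IZR m). set (N := IZR n). set (P := IZR p).
 destruct (region_facts x t z M N P Hx Ht' Hz) as [F1 [F2 [F3 [F4 [F5 F6]]]]].
 pose proof (pow2_ge_0 M). pose proof (pow2_ge_0 N). pose proof (pow2_ge_0 P).
 set (r := M ^ 2 + N ^ 2 + P ^ 2) in *.
 assert (HP : P ^ 2 <= r) by (unfold r; lra). assert (HN : N ^ 2 <= r) by (unfold r; lra).
 split.
 - apply bnd_C with 8; [|lra|lra]. replace 8 with (2 * 4) by ring. apply abs_inv_mul; auto; [|lra].
   replace (2 * (M + x * N + t * P) * P) with (2 * ((M + x * N + t * P) * P)) by ring.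
   rewrite Rabs_mult, Rabs_pos_eq by lra. lra.
 - apply bnd_C with 4; [|lra|lra]. replace 4 with (2 * 2) by ring. apply abs_inv_mul; auto; [|lra].
   rewrite Rabs_pos_eq by lra. lra.
Qed.

Lemma dirZ f f1 f2 V u v x y z0 : Hderiv f f1 f2 -> Hdecay f f1 f2 ->
  1/2 <= u <= 2 -> 1/2 <= v <= 2 -> -1 <= x <= 1 -> -1 <= y <= 1 -> -3/4 <= z0 <= 3/4 ->
  is_derive (fun t => Ef f V u v x y t) z0
    (LB (fun q => if isz q then 0 else f1 (QLq V u v x y z0 q) * Q1z V u v x y z0 q)).
Proof.
 intros Hf Hd Hu Hv Hx Hy Hz.
 apply (Ef_deriv_gen f f1 f2 (fun t q => QLq V u v x y t q) (fun t q => Q1z V u v x y t q)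
   (fun t q => Q2z V u v x y t q) z0 _ (Cst V / 1536) (1000 * Cst V)); auto.
 { intros; apply Ef_LB. }
 { pose proof (Cst_pos V); lra. } { pose proof (Cst_pos V); lra. }
 intros t [[m n] p] Ht _. assert (Ht' : -1 <= t <= 1) by lra.
 assert (Hun : u <> 0) by (intro; lra). assert (Hvn : v <> 0) by (intro; lra).
 split. { simpl. unfold QL. auto_derive; try solve [repeat split; try assumption; intro; nra]. unfold Q1z. field. auto. }
 split. { simpl. auto_derive; try solve [repeat split; try assumption; intro; nra]. field. auto. }
 split. apply QL_lower; auto.
 rewrite rho_eq. unfold Q1z, Q2z. cbv beta iota.
 set (M := IZR m). set (N := IZR n). set (P := IZR p).
 destruct (region_facts x y t M N P Hx Hy Ht') as [F1 [F2 [F3 [F4 [F5 F6]]]]].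
 pose proof (pow2_ge_0 M). pose proof (pow2_ge_0 N). pose proof (pow2_ge_0 P).
 set (r := M ^ 2 + N ^ 2 + P ^ 2) in *.
 assert (HP : P ^ 2 <= r) by (unfold r; lra). assert (HN : N ^ 2 <= r) by (unfold r; lra).
 assert (V2 : 0 <= v ^ 2 <= 4) by nra.
 split.
 - apply bnd_C with 32; [|lra|lra]. replace 32 with (2 * 16) by ring. apply abs_inv_mul; auto; [|lra].
   replace (2 * v ^ 2 * (N + t * P) * P) with ((2 * v ^ 2) * ((N + t * P) * P)) by ring.
   rewrite Rabs_mult, (Rabs_pos_eq (2 * v ^ 2)) by lra.
   pose proof (Rabs_pos ((N + t * P) * P)). 
   pose proof (pb (2 * v ^ 2) (Rabs ((N + t * P) * P)) 8 (2 * r) ltac:(lra) ltac:(lra)). lra.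
 - apply bnd_C with 16; [|lra|lra]. replace 16 with (2 * 8) by ring. apply abs_inv_mul; auto; [|lra].
   pose proof (pb (2 * v ^ 2) (P ^ 2) 8 r ltac:(lra) ltac:(lra)).
   rewrite Rabs_pos_eq by lra. lra.
Qed.

Definition quad (a1 a2 a3 a4 a5 a6 : R) (q : Z3) : R := let '(m, n, p) := q in
  a1 * IZR m ^ 2 + a2 * IZR n ^ 2 + a3 * IZR p ^ 2 + a4 * (IZR m * IZR n) + a5 * (IZR m * IZR p) + a6 * (IZR n * IZR p).

Lemma term_bd a X r : Rabs X <= r -> - (Rabs a * r) <= a * X <= Rabs a * r.
Proof. intros H. apply Rabs_le_between. rewrite Rabs_mult. apply Rmult_le_compat_l; auto. apply Rabs_pos. Qed.

Lemma quad_bd a1 a2 a3 a4 a5 a6 q :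
  Rabs (quad a1 a2 a3 a4 a5 a6 q) <= (Rabs a1 + Rabs a2 + Rabs a3 + Rabs a4 + Rabs a5 + Rabs a6) * rho q.
Proof.
 destruct q as [[m n] p]. rewrite rho_eq. simpl quad.
 set (M := IZR m). set (N := IZR n). set (P := IZR p).
 pose proof (pow2_ge_0 M). pose proof (pow2_ge_0 N). pose proof (pow2_ge_0 P).
 set (r := M ^ 2 + N ^ 2 + P ^ 2).
 assert (B1 : Rabs (M ^ 2) <= r) by (rewrite Rabs_pos_eq by lra; unfold r; lra).
 assert (B2 : Rabs (N ^ 2) <= r) by (rewrite Rabs_pos_eq by lra; unfold r; lra).
 assert (B3 : Rabs (P ^ 2) <= r) by (rewrite Rabs_pos_eq by lra; unfold r; lra).
 assert (B4 : Rabs (M * N) <= r) by (pose proof (ab_le M N); unfold r; lra).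
 assert (B5 : Rabs (M * P) <= r) by (pose proof (ab_le M P); unfold r; lra).
 assert (B6 : Rabs (N * P) <= r) by (pose proof (ab_le N P); unfold r; lra).
 apply term_bd with (a := a1) in B1. apply term_bd with (a := a2) in B2. apply term_bd with (a := a3) in B3.
 apply term_bd with (a := a4) in B4. apply term_bd with (a := a5) in B5. apply term_bd with (a := a6) in B6.
 apply Rabs_le_between. lra.
Qed.

Section Point.
Variables (f1 : R -> R) (Q0 : Z3 -> R) (lam K eta : R).
Hypothesis Hlam : 0 < lam.
Hypothesis HK : 0 <= K.
Hypothesis Heta : 0 < eta.
Hypothesis Hf1 : forall r, lam <= r -> Rabs (f1 r) <= K * Rpower r (-(3/2 + eta + 1)).
Hypothesis HQ0 : forall q, isz q = false -> lam * rho q <= Q0 q.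

Definition G (a1 a2 a3 a4 a5 a6 : R) (q : Z3) : R :=
  if isz q then 0 else f1 (Q0 q) * quad a1 a2 a3 a4 a5 a6 q.

Lemma Summ_G a1 a2 a3 a4 a5 a6 : Summ (G a1 a2 a3 a4 a5 a6).
Proof.
 set (c := Rabs a1 + Rabs a2 + Rabs a3 + Rabs a4 + Rabs a5 + Rabs a6).
 assert (Hc : 0 <= c). { unfold c. pose proof (Rabs_pos a1). pose proof (Rabs_pos a2). pose proof (Rabs_pos a3).
   pose proof (Rabs_pos a4). pose proof (Rabs_pos a5). pose proof (Rabs_pos a6). lra. }
 exists (K * c * Rpower lam (-(3/2 + eta + 1))), eta. split. apply Rmult_le_pos. apply Rmult_le_pos; auto. left; apply Rpow_pos.
 split; auto. intros q. unfold G, hs. destruct (isz q) eqn:Hq. rewrite Rabs_R0; lra.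
 pose proof (rho_ge1 q Hq) as R1. pose proof (HQ0 q Hq) as R2.
 assert (Hge : lam <= Q0 q) by nra.
 pose proof (Hf1 _ Hge) as H. pose proof (quad_bd a1 a2 a3 a4 a5 a6 q) as H1. fold c in H1.
 assert (Hp : Rpower (Q0 q) (-(3/2 + eta + 1)) <= Rpower lam (-(3/2 + eta + 1)) * Rpower (rho q) (-(3/2 + eta + 1))).
 { rewrite <- Rpow_mul by lra. apply Rpow_anti. split; nra. lra. }
 rewrite Rabs_mult.
 apply Rle_trans with (K * (Rpower lam (-(3/2 + eta + 1)) * Rpower (rho q) (-(3/2 + eta + 1))) * (c * rho q)).
 apply Rmult_le_compat; try apply Rabs_pos. eapply Rle_trans. apply H. apply Rmult_le_compat_l; auto. auto.
 rewrite (Rpow_x (rho q)) at 2 by lra.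
 replace (K * (Rpower lam (- (3/2 + eta + 1)) * Rpower (rho q) (- (3/2 + eta + 1))) * (c * Rpower (rho q) 1)) with
   (K * c * Rpower lam (- (3/2 + eta + 1)) * (Rpower (rho q) (- (3/2 + eta + 1)) * Rpower (rho q) 1)) by ring.
 rewrite Rpow_shift by lra. lra.
Qed.

Definition s1 := LB (G 1 0 0 0 0 0).
Definition s2 := LB (G 0 1 0 0 0 0).
Definition s3 := LB (G 0 0 1 0 0 0).
Definition s4 := LB (G 0 0 0 1 0 0).
Definition s5 := LB (G 0 0 0 0 1 0).
Definition s6 := LB (G 0 0 0 0 0 1).

Lemma LB_G a1 a2 a3 a4 a5 a6 :
  LB (G a1 a2 a3 a4 a5 a6) = a1 * s1 + a2 * s2 + a3 * s3 + a4 * s4 + a5 * s5 + a6 * s6.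
Proof.
 unfold LB at 1. rewrite (is_lim_seq_unique _ (a1 * s1 + a2 * s2 + a3 * s3 + a4 * s4 + a5 * s5 + a6 * s6)). auto.
 apply is_lim_seq_ext with (fun N => a1 * SumBox N (G 1 0 0 0 0 0) + a2 * SumBox N (G 0 1 0 0 0 0)
   + a3 * SumBox N (G 0 0 1 0 0 0) + a4 * SumBox N (G 0 0 0 1 0 0) + a5 * SumBox N (G 0 0 0 0 1 0)
   + a6 * SumBox N (G 0 0 0 0 0 1)).
 { intros N. unfold SumBox. rewrite <- !lsum_scal, <- !lsum_plus. apply lsum_ext. intros q _.
   unfold G. destruct (isz q). ring. destruct q as [[m n] p]. simpl quad. ring. }
 repeat apply is_lim_seq_plus'; apply (is_lim_seq_scal_l _ _ (Finite _)); apply LB_correct; apply Summ_G.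
Qed.

Lemma sym_S (sigma : Z3 -> Z3) a1 a2 a3 a4 a5 a6 b1 b2 b3 b4 b5 b6 :
  (forall q, sigma (sigma q) = q) -> (forall q, (ninf (sigma q) <= 3 * ninf q)%Z) ->
  (forall q, Q0 (sigma q) = Q0 q) ->
  (forall q, quad a1 a2 a3 a4 a5 a6 (sigma q) = quad b1 b2 b3 b4 b5 b6 q) ->
  LB (G a1 a2 a3 a4 a5 a6) = LB (G b1 b2 b3 b4 b5 b6).
Proof.
 intros Hinv Hbd HQ Hq. rewrite <- (LB_sigma sigma Hinv Hbd (G a1 a2 a3 a4 a5 a6)) by apply Summ_G.
 apply LB_ext. intros q. unfold G. rewrite (sigma_isz sigma Hinv Hbd), HQ, Hq. auto.
Qed.

Lemma LB_kG k a1 a2 a3 a4 a5 a6 (Q1 : Z3 -> R) :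
  (forall q, Q1 q = k * quad a1 a2 a3 a4 a5 a6 q) ->
  LB (fun q => if isz q then 0 else f1 (Q0 q) * Q1 q) = k * (a1 * s1 + a2 * s2 + a3 * s3 + a4 * s4 + a5 * s5 + a6 * s6).
Proof.
 intros H. rewrite <- LB_G, <- LB_scal by apply Summ_G. apply LB_ext. intros q. unfold G.
 destruct (isz q). ring. rewrite H. ring.
Qed.
End Point.

Lemma rel_S f1 Q0 lam K eta (Hlam : 0 < lam) (HK : 0 <= K) (Heta : 0 < eta)
  (Hf1 : forall r, lam <= r -> Rabs (f1 r) <= K * Rpower r (-(3/2 + eta + 1)))
  (HQ0 : forall q, isz q = false -> lam * rho q <= Q0 q)
  (sigma : Z3 -> Z3) a1 a2 a3 a4 a5 a6 b1 b2 b3 b4 b5 b6 :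
  (forall q, sigma (sigma q) = q) -> (forall q, (ninf (sigma q) <= 3 * ninf q)%Z) ->
  (forall q, Q0 (sigma q) = Q0 q) ->
  (forall q, quad a1 a2 a3 a4 a5 a6 (sigma q) = quad b1 b2 b3 b4 b5 b6 q) ->
  a1 * s1 f1 Q0 + a2 * s2 f1 Q0 + a3 * s3 f1 Q0 + a4 * s4 f1 Q0 + a5 * s5 f1 Q0 + a6 * s6 f1 Q0 =
  b1 * s1 f1 Q0 + b2 * s2 f1 Q0 + b3 * s3 f1 Q0 + b4 * s4 f1 Q0 + b5 * s5 f1 Q0 + b6 * s6 f1 Q0.
Proof. intros H1 H2 H3 H4. rewrite <- !(LB_G f1 Q0 lam K eta); auto. eapply (sym_S f1 Q0 lam K eta Hlam HK Heta Hf1 HQ0 sigma); eauto. Qed.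

Definition sA (q : Z3) : Z3 := let '(m, n, p) := q in ((- m - p)%Z, n, p).
Definition sB (q : Z3) : Z3 := let '(m, n, p) := q in (m, (- n - p)%Z, p).
Definition sW (q : Z3) : Z3 := let '(m, n, p) := q in (n, m, p).
Definition s13 (q : Z3) : Z3 := let '(m, n, p) := q in ((- n)%Z, (- m)%Z, (m + n + p)%Z).
Definition sXZ (q : Z3) : Z3 := let '(m, n, p) := q in ((- m)%Z, (n - m)%Z, (2 * m + p)%Z).
Definition nM (q : Z3) : Z3 := let '(m, n, p) := q in ((- m)%Z, n, p).
Definition nN (q : Z3) : Z3 := let '(m, n, p) := q in (m, (- n)%Z, p).
Definition wMP (q : Z3) : Z3 := let '(m, n, p) := q in (p, n, m).
Definition wNP (q : Z3) : Z3 := let '(m, n, p) := q in (m, p, n).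

Ltac inv_tac := intros [[m n] p]; unfold sA, sB, sW, s13, sXZ, nM, nN, wMP, wNP; cbv beta iota; repeat f_equal; lia.
Ltac bd_tac := intros [[m n] p]; unfold ninf, sA, sB, sW, s13, sXZ, nM, nN, wMP, wNP; cbv beta iota; lia.

Lemma sA_inv q : sA (sA q) = q. Proof. revert q; inv_tac. Qed.
Lemma sB_inv q : sB (sB q) = q. Proof. revert q; inv_tac. Qed.
Lemma sW_inv q : sW (sW q) = q. Proof. revert q; inv_tac. Qed.
Lemma s13_inv q : s13 (s13 q) = q. Proof. revert q; inv_tac. Qed.
Lemma sXZ_inv q : sXZ (sXZ q) = q. Proof. revert q; inv_tac. Qed.
Lemma nM_inv q : nM (nM q) = q. Proof. revert q; inv_tac. Qed.
Lemma nN_inv q : nN (nN q) = q. Proof. revert q; inv_tac. Qed.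
Lemma wMP_inv q : wMP (wMP q) = q. Proof. revert q; inv_tac. Qed.
Lemma wNP_inv q : wNP (wNP q) = q. Proof. revert q; inv_tac. Qed.
Lemma sA_bd q : (ninf (sA q) <= 3 * ninf q)%Z. Proof. revert q; bd_tac. Qed.
Lemma sB_bd q : (ninf (sB q) <= 3 * ninf q)%Z. Proof. revert q; bd_tac. Qed.
Lemma sW_bd q : (ninf (sW q) <= 3 * ninf q)%Z. Proof. revert q; bd_tac. Qed.
Lemma s13_bd q : (ninf (s13 q) <= 3 * ninf q)%Z. Proof. revert q; bd_tac. Qed.
Lemma sXZ_bd q : (ninf (sXZ q) <= 3 * ninf q)%Z. Proof. revert q; bd_tac. Qed.
Lemma nM_bd q : (ninf (nM q) <= 3 * ninf q)%Z. Proof. revert q; bd_tac. Qed.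
Lemma nN_bd q : (ninf (nN q) <= 3 * ninf q)%Z. Proof. revert q; bd_tac. Qed.
Lemma wMP_bd q : (ninf (wMP q) <= 3 * ninf q)%Z. Proof. revert q; bd_tac. Qed.
Lemma wNP_bd q : (ninf (wNP q) <= 3 * ninf q)%Z. Proof. revert q; bd_tac. Qed.

Ltac izr := repeat (rewrite ?minus_IZR, ?plus_IZR, ?opp_IZR, ?mult_IZR).
Ltac quad_tac := intros [[m n] p]; unfold quad, sA, sB, sW, s13, sXZ, nM, nN, wMP, wNP; cbv beta iota; izr; ring.

Ltac Q0_tac := intros [[m n] p]; unfold QLq, QL, sA, sB, sW, s13, sXZ, nM, nN, wMP, wNP; cbv beta iota; izr.

Lemma zero_comb k c : c = 0 -> k * c = 0.
Proof. intros ->; ring. Qed.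

Lemma pointY f f1 f2 V u0 : Hderiv f f1 f2 -> Hdecay f f1 f2 -> 3/4 <= u0 <= 7/4 ->
  (u0 ^ 3 = 1 \/ u0 ^ 3 = 1/2) -> is_critical_at f V u0 1 0 (1/2) (1/2).
Proof.
 intros Hd Hdec Hu0 Hw. assert (Hun : u0 <> 0) by (intro; lra).
 assert (Hl : 0 < Cst V / 1536) by (pose proof (Cst_pos V); lra).
 destruct (Hdec _ Hl) as [K [eta [HK [He Hb]]]].
 assert (Hf1 : forall r, Cst V / 1536 <= r -> Rabs (f1 r) <= K * Rpower r (-(3/2 + eta + 1))) by (intros; apply Hb; auto).
 set (Q0 := fun q => QLq V u0 1 0 (1/2) (1/2) q).
 assert (HQ0 : forall q, isz q = false -> Cst V / 1536 * rho q <= Q0 q).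
 { intros [[m n] p] _. unfold Q0. apply QL_lower; lra. }
 pose proof (rel_S f1 Q0 _ K eta Hl HK He Hf1 HQ0 sA 0 0 0 1 0 0 0 0 0 (-1) 0 (-1) sA_inv sA_bd) as R1.
 pose proof (rel_S f1 Q0 _ K eta Hl HK He Hf1 HQ0 sA 0 0 0 0 1 0 0 0 (-1) 0 (-1) 0 sA_inv sA_bd) as R2.
 pose proof (rel_S f1 Q0 _ K eta Hl HK He Hf1 HQ0 sB 0 0 0 0 0 1 0 0 (-1) 0 0 (-1) sB_inv sB_bd) as R3.
 pose proof (rel_S f1 Q0 _ K eta Hl HK He Hf1 HQ0 sW 1 0 0 0 0 0 0 1 0 0 0 0 sW_inv sW_bd) as R4.
 assert (HA : forall q, Q0 (sA q) = Q0 q) by (unfold Q0; Q0_tac; field; auto).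
 assert (HB : forall q, Q0 (sB q) = Q0 q) by (unfold Q0; Q0_tac; field; auto).
 assert (HW : forall q, Q0 (sW q) = Q0 q) by (unfold Q0; Q0_tac; field; auto).
 specialize (R1 HA ltac:(quad_tac)). specialize (R2 HA ltac:(quad_tac)).
 specialize (R3 HB ltac:(quad_tac)). specialize (R4 HW ltac:(quad_tac)).
 assert (R5 : 2 * s1 f1 Q0 = (u0 ^ 3 + 1/2) * s3 f1 Q0 / 2 * 2).
 { destruct Hw as [Hw|Hw].
   - assert (H13 : forall q, Q0 (s13 q) = Q0 q) by (unfold Q0; Q0_tac; rewrite Hw; field; auto).
     pose proof (rel_S f1 Q0 _ K eta Hl HK He Hf1 HQ0 s13 0 0 1 0 0 0 1 1 1 2 2 2 s13_inv s13_bd H13 ltac:(quad_tac)).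
     rewrite Hw. lra.
   - assert (H13 : forall q, Q0 (sXZ q) = Q0 q) by (unfold Q0; Q0_tac; rewrite Hw; field; auto).
     pose proof (rel_S f1 Q0 _ K eta Hl HK He Hf1 HQ0 sXZ 0 1 0 0 0 0 1 1 0 (-2) 0 0 sXZ_inv sXZ_bd H13 ltac:(quad_tac)).
     rewrite Hw. lra. }
 unfold is_critical_at, critical5. split; [|split; [|split; [|split]]].
 - eapply is_derive_eq. apply (dirU f f1 f2 V u0 1 0 (1/2) (1/2)); auto; lra.
   eapply eq_trans. apply (LB_kG f1 Q0 _ K eta Hl HK He Hf1 HQ0 (Cst V * (/ u0) ^ 2) (-1) (-1) (u0 ^ 3 - 1/2) 0 (-1) (-1)).
   { intros [[m n] p]. unfold Q1u, quad. cbv beta iota. field. auto. }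
   apply zero_comb. lra.
 - eapply is_derive_eq. apply (dirV f f1 f2 V u0 1 0 (1/2) (1/2)); auto; lra.
   eapply eq_trans. apply (LB_kG f1 Q0 _ K eta Hl HK He Hf1 HQ0 (Cst V * / u0) 0 2 (1/2 - u0 ^ 3) 0 0 2).
   { intros [[m n] p]. unfold Q1v, quad. cbv beta iota. field. auto. }
   apply zero_comb. lra.
 - eapply is_derive_eq. apply (dirX f f1 f2 V u0 1 0 (1/2) (1/2)); auto; lra.
   eapply eq_trans. apply (LB_kG f1 Q0 _ K eta Hl HK He Hf1 HQ0 (Cst V * / u0) 0 0 0 2 0 1).
   { intros [[m n] p]. unfold Q1x, quad. cbv beta iota. field. auto. }
   apply zero_comb. lra.
 - eapply is_derive_eq. apply (dirY f f1 f2 V u0 1 0 (1/2) (1/2)); auto; lra.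
   eapply eq_trans. apply (LB_kG f1 Q0 _ K eta Hl HK He Hf1 HQ0 (Cst V * / u0) 0 0 1 0 2 0).
   { intros [[m n] p]. unfold Q1y, quad. cbv beta iota. field. auto. }
   apply zero_comb. lra.
 - eapply is_derive_eq. apply (dirZ f f1 f2 V u0 1 0 (1/2) (1/2)); auto; lra.
   eapply eq_trans. apply (LB_kG f1 Q0 _ K eta Hl HK He Hf1 HQ0 (Cst V * / u0) 0 0 1 0 0 2).
   { intros [[m n] p]. unfold Q1z, quad. cbv beta iota. field. auto. }
   apply zero_comb. lra.
Qed.

Lemma pointC f f1 f2 V u0 : Hderiv f f1 f2 -> Hdecay f f1 f2 -> 3/4 <= u0 <= 7/4 ->
  u0 ^ 3 = 2 -> is_critical_at f V u0 1 0 0 0.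
Proof.
 intros Hd Hdec Hu0 Hw. assert (Hun : u0 <> 0) by (intro; lra).
 assert (Hl : 0 < Cst V / 1536) by (pose proof (Cst_pos V); lra).
 destruct (Hdec _ Hl) as [K [eta [HK [He Hb]]]].
 assert (Hf1 : forall r, Cst V / 1536 <= r -> Rabs (f1 r) <= K * Rpower r (-(3/2 + eta + 1))) by (intros; apply Hb; auto).
 set (Q0 := fun q => QLq V u0 1 0 0 0 q).
 assert (HQ0 : forall q, isz q = false -> Cst V / 1536 * rho q <= Q0 q).
 { intros [[m n] p] _. unfold Q0. apply QL_lower; lra. }
 assert (HM : forall q, Q0 (nM q) = Q0 q) by (unfold Q0; Q0_tac; field; auto).
 assert (HN : forall q, Q0 (nN q) = Q0 q) by (unfold Q0; Q0_tac; field; auto).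
 assert (HMP : forall q, Q0 (wMP q) = Q0 q) by (unfold Q0; Q0_tac; rewrite Hw; field; auto).
 assert (HNP : forall q, Q0 (wNP q) = Q0 q) by (unfold Q0; Q0_tac; rewrite Hw; field; auto).
 pose proof (rel_S f1 Q0 _ K eta Hl HK He Hf1 HQ0 nM 0 0 0 1 0 0 0 0 0 (-1) 0 0 nM_inv nM_bd HM ltac:(quad_tac)) as R1.
 pose proof (rel_S f1 Q0 _ K eta Hl HK He Hf1 HQ0 nM 0 0 0 0 1 0 0 0 0 0 (-1) 0 nM_inv nM_bd HM ltac:(quad_tac)) as R2.
 pose proof (rel_S f1 Q0 _ K eta Hl HK He Hf1 HQ0 nN 0 0 0 0 0 1 0 0 0 0 0 (-1) nN_inv nN_bd HN ltac:(quad_tac)) as R3.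
 pose proof (rel_S f1 Q0 _ K eta Hl HK He Hf1 HQ0 wMP 1 0 0 0 0 0 0 0 1 0 0 0 wMP_inv wMP_bd HMP ltac:(quad_tac)) as R4.
 pose proof (rel_S f1 Q0 _ K eta Hl HK He Hf1 HQ0 wNP 0 1 0 0 0 0 0 0 1 0 0 0 wNP_inv wNP_bd HNP ltac:(quad_tac)) as R5.
 unfold is_critical_at, critical5. split; [|split; [|split; [|split]]].
 - eapply is_derive_eq. apply (dirU f f1 f2 V u0 1 0 0 0); auto; lra.
   eapply eq_trans. apply (LB_kG f1 Q0 _ K eta Hl HK He Hf1 HQ0 (Cst V * (/ u0) ^ 2) (-1) (-1) (u0 ^ 3) 0 0 0).
   { intros [[m n] p]. unfold Q1u, quad. cbv beta iota. field. auto. }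
   apply zero_comb. rewrite Hw. lra.
 - eapply is_derive_eq. apply (dirV f f1 f2 V u0 1 0 0 0); auto; lra.
   eapply eq_trans. apply (LB_kG f1 Q0 _ K eta Hl HK He Hf1 HQ0 (Cst V * / u0) 0 2 (- u0 ^ 3) 0 0 0).
   { intros [[m n] p]. unfold Q1v, quad. cbv beta iota. field. auto. }
   apply zero_comb. rewrite Hw. lra.
 - eapply is_derive_eq. apply (dirX f f1 f2 V u0 1 0 0 0); auto; lra.
   eapply eq_trans. apply (LB_kG f1 Q0 _ K eta Hl HK He Hf1 HQ0 (Cst V * / u0) 0 0 0 2 0 0).
   { intros [[m n] p]. unfold Q1x, quad. cbv beta iota. field. auto. }
   apply zero_comb. lra.
 - eapply is_derive_eq. apply (dirY f f1 f2 V u0 1 0 0 0); auto; lra.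
   eapply eq_trans. apply (LB_kG f1 Q0 _ K eta Hl HK He Hf1 HQ0 (Cst V * / u0) 0 0 0 0 2 0).
   { intros [[m n] p]. unfold Q1y, quad. cbv beta iota. field. auto. }
   apply zero_comb. lra.
 - eapply is_derive_eq. apply (dirZ f f1 f2 V u0 1 0 0 0); auto; lra.
   eapply eq_trans. apply (LB_kG f1 Q0 _ K eta Hl HK He Hf1 HQ0 (Cst V * / u0) 0 0 0 0 0 2).
   { intros [[m n] p]. unfold Q1z, quad. cbv beta iota. field. auto. }
   apply zero_comb. lra.
Qed.

Lemma cube_Rpower a : Rpower 2 a ^ 3 = Rpower 2 (a * 3).
Proof. rewrite <- Rpower_pow by apply Rpow_pos. rewrite Rpower_mult. f_equal. f_equal. simpl. ring. Qed.

Lemma cube_bounds u : 0 < u -> 1/2 <= u ^ 3 <= 2 -> 3/4 <= u <= 7/4.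
Proof. intros Hu [H1 H2]. split.
 - apply Rnot_lt_le. intro H. assert (u * u < 9/16) by nra. nra.
 - apply Rnot_lt_le. intro H. assert (u * u > 49/16) by nra. nra.
Qed.

Theorem proposition3p2 :
  forall (f : R -> R) (V : R), in_class_F f -> 0 < V ->
    is_critical_at f V 1 1 0 (1/2) (1/2) /\
    is_critical_at f V (Rpower 2 (-1/3)) 1 0 (1/2) (1/2) /\
    is_critical_at f V (Rpower 2 (1/3)) 1 0 0 0.
Proof.
 intros f V Hf HV. destruct (decay_all f Hf) as [f1 [f2 [Hd Hdec]]].
 assert (Hd' : Hderiv f f1 f2) by exact Hd. assert (Hdec' : Hdecay f f1 f2) by exact Hdec.
 split; [|split].
 - apply (pointY f f1 f2); auto. lra. left; ring.
 - assert (H3 : Rpower 2 (-1/3) ^ 3 = 1/2).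
   { rewrite cube_Rpower. replace (-1/3 * 3) with (-(1)) by field. rewrite Rpower_Ropp, Rpower_1; lra. }
   apply (pointY f f1 f2); auto. apply cube_bounds. apply Rpow_pos. lra.
 - assert (H3 : Rpower 2 (1/3) ^ 3 = 2).
   { rewrite cube_Rpower. replace (1/3 * 3) with 1 by field. rewrite Rpower_1; lra. }
   apply (pointC f f1 f2); auto. apply cube_bounds. apply Rpow_pos. lra.
Qed.
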